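(* Let $\nu\in\mathbb{S}^{2n}$, $d\in\mathbb{R}$, $\Pi^+_{\nu,d}=\{\xi\in\mathbb{R}^{2n+1}:\langle\xi,\nu\rangle>d\}$, $p\ge2$ (in fact any $p>1$) and $1\le i\le n$. Then for every real-valued $u\in C_0^\infty(\Pi^+_{\nu,d})$, \[ \Bigl(\frac{p-1}{p}\Bigr)^p\int_{\Pi^+_{\nu,d}}\frac{|\langle X_i(\xi),\nu\rangle|^p}{\operatorname{dist}(\xi,\partial\Pi^+_{\nu,d})^p}|u|^p\,d\xi\le\int_{\Pi^+_{\nu,d}}|X_iu|^p\,d\xi, \] and the same inequality holds with $X_i$ replaced by $Y_i$ on both sides.
   Context: Points of $\mathbb{R}^{2n+1}$ are written $\xi=(x,y,t)$, $x,y\in\mathbb{R}^n$, $t\in\mathbb{R}$. For $1\le i\le n$, $X_i=\partial_{x_i}+2y_i\partial_t$ and $Y_i=\partial_{y_i}-2x_i\partial_t$ (the left-invariant horizontal vector fields of the Heisenberg group $\mathbb{H}^n$), identified with their coefficient vectors in $\mathbb{R}^{2n+1}$; $\langle\cdot,\cdot\rangle$ is the Euclidean inner product, $\mathbb{S}^{2n}$ the Euclidean unit sphere, $\operatorname{dist}$ the Euclidean distance. *)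

(* Defs.v *)
(* Points of R^N are encoded as (nat -> R),
   only coordinates 0..N-1 being meaningful. For R^{2n+1}:
   x_j = coord (j-1), y_j = coord (n+j-1), t = coord 2n   (j = 1..n). *)
From Stdlib Require Import Reals Lra Classical ClassicalEpsilon.
Open Scope R_scope.

Fixpoint sumN (N : nat) (f : nat -> R) : R :=
  match N with O => 0 | S m => sumN m f + f m end.

Definition dotN (N : nat) (a b : nat -> R) : R := sumN N (fun k => a k * b k).

Definition eucl_dist (N : nat) (a b : nat -> R) : R :=
  sqrt (sumN N (fun k => (a k - b k) ^ 2)).

(* |x|^p with the convention 0^p = 0 (p > 0) *)
Definition powa (x p : R) : R :=
  if Req_dec_T x 0 then 0 else Rpower (Rabs x) p.

Definition upd (xi : nat -> R) (k : nat) (s : R) : nat -> R :=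
  fun j => if Nat.eq_dec j k then s else xi j.

Definition pder (k : nat) (u : (nat -> R) -> R) (xi : nat -> R) (l : R) : Prop :=
  derivable_pt_lim (fun s => u (upd xi k s)) (xi k) l.

(* the k-th partial derivative (0 where it does not exist) *)
Definition pd (k : nat) (u : (nat -> R) -> R) (xi : nat -> R) : R :=
  match excluded_middle_informative (exists l, pder k u xi l) with
  | left H => proj1_sig (constructive_indefinite_description _ H)
  | right _ => 0
  end.

(* u is a function on R^N: it only depends on the first N coordinates *)
Definition depends_only (N : nat) (u : (nat -> R) -> R) : Prop :=
  forall xi eta, (forall k, (k < N)%nat -> xi k = eta k) -> u xi = u eta.

Definition contN (N : nat) (u : (nat -> R) -> R) : Prop :=
  forall xi eps, 0 < eps -> exists del, 0 < del /\
    forall eta, (forall k, (k < N)%nat -> Rabs (eta k - xi k) < del) ->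
      Rabs (u eta - u xi) < eps.

Fixpoint CkN (m N : nat) (u : (nat -> R) -> R) : Prop :=
  contN N u /\
  match m with
  | O => True
  | S m' => forall k, (k < N)%nat ->
      (forall xi, exists l, pder k u xi l) /\ CkN m' N (pd k u)
  end.

Definition smoothN (N : nat) (u : (nat -> R) -> R) : Prop := forall m, CkN m N u.

Definition closedN (N : nat) (K : (nat -> R) -> Prop) : Prop :=
  forall xi, (forall eps, 0 < eps -> exists eta, K eta /\
                 forall k, (k < N)%nat -> Rabs (eta k - xi k) < eps) -> K xi.

Definition boundedN (N : nat) (K : (nat -> R) -> Prop) : Prop :=
  exists R0, forall xi, K xi -> forall k, (k < N)%nat -> Rabs (xi k) <= R0.

Definition compact_support_in (N : nat) (u : (nat -> R) -> R) (O : (nat -> R) -> Prop) : Prop :=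
  exists K, closedN N K /\ boundedN N K /\ (forall xi, K xi -> O xi) /\
    (forall xi, u xi <> 0 -> K xi).

(* Riemann integral on [a,b], 0 if not integrable (value independent of the proof) *)
Definition RInt (f : R -> R) (a b : R) : R :=
  match excluded_middle_informative (exists pr : Riemann_integrable f a b, True) with
  | left H => RiemannInt (proj1_sig (constructive_indefinite_description _ H))
  | right _ => 0
  end.

Fixpoint intCube (N : nat) (M : R) (f : (nat -> R) -> R) : R :=
  match N with
  | O => f (fun _ => 0)
  | S m => RInt (fun s => intCube m M (fun xi => f (upd xi m s))) (- M) M
  end.

Definition integralRN (N : nat) (f : (nat -> R) -> R) : R :=
  match excluded_middle_informative
          (exists l, Un_cv (fun m => intCube N (INR m) f) l) with
  | left H => proj1_sig (constructive_indefinite_description _ H)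
  | right _ => 0
  end.

Definition integral_on (N : nat) (O : (nat -> R) -> Prop) (f : (nat -> R) -> R) : R :=
  integralRN N (fun xi => if excluded_middle_informative (O xi) then f xi else 0).

(* infimum of a set of reals (0 if none) *)
Definition is_glb (E : R -> Prop) (m : R) : Prop :=
  (forall x, E x -> m <= x) /\ (forall b, (forall x, E x -> b <= x) -> b <= m).

Definition Rinf (E : R -> Prop) : R :=
  match excluded_middle_informative (exists m, is_glb E m) with
  | left H => proj1_sig (constructive_indefinite_description _ H)
  | right _ => 0
  end.

Definition distN (N : nat) (xi : nat -> R) (S : (nat -> R) -> Prop) : R :=
  Rinf (fun r => exists eta, S eta /\ r = eucl_dist N xi eta).

Definition halfspace (N : nat) (nu : nat -> R) (d : R) (xi : nat -> R) : Prop :=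
  d < dotN N xi nu.
Definition hyperplane (N : nat) (nu : nat -> R) (d : R) (xi : nat -> R) : Prop :=
  dotN N xi nu = d.

(* Heisenberg vector fields on R^{2n+1}, as coefficient vectors (1 <= i <= n) *)
Definition Xvec (n i : nat) (xi : nat -> R) : nat -> R :=
  fun k => if Nat.eq_dec k (i - 1) then 1
           else if Nat.eq_dec k (2 * n) then 2 * xi (n + (i - 1))%nat else 0.
Definition Yvec (n i : nat) (xi : nat -> R) : nat -> R :=
  fun k => if Nat.eq_dec k (n + (i - 1)) then 1
           else if Nat.eq_dec k (2 * n) then - 2 * xi (i - 1)%nat else 0.

Definition vf_apply (N : nat) (V : (nat -> R) -> nat -> R) (u : (nat -> R) -> R)
  (xi : nat -> R) : R := sumN N (fun k => V xi k * pd k u xi).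

(* Main.v *)
Require Import Defs.
From Stdlib Require Import Reals Lra Lia Classical ClassicalEpsilon FunctionalExtensionality.
From Coquelicot Require Import Coquelicot.
Open Scope R_scope.


Lemma upd_same (x : nat -> R) k s : upd x k s k = s.
Proof. unfold upd. destruct (Nat.eq_dec k k); [reflexivity|congruence]. Qed.

Lemma upd_other (x : nat -> R) k s j : j <> k -> upd x k s j = x j.
Proof. intros H. unfold upd. destruct (Nat.eq_dec j k); [congruence|reflexivity]. Qed.

Lemma upd_upd_same (x : nat -> R) k s t : upd (upd x k t) k s = upd x k s.
Proof. apply functional_extensionality; intro j. unfold upd.
  destruct (Nat.eq_dec j k); reflexivity. Qed.

Lemma upd_comm (x : nat -> R) j k s t : j <> k ->
  upd (upd x j s) k t = upd (upd x k t) j s.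
Proof. intros H. apply functional_extensionality; intro m. unfold upd.
  destruct (Nat.eq_dec m k); destruct (Nat.eq_dec m j); subst; try reflexivity; congruence. Qed.

Lemma upd_id (x : nat -> R) k : upd x k (x k) = x.
Proof. apply functional_extensionality; intro m. unfold upd.
  destruct (Nat.eq_dec m k); subst; reflexivity. Qed.

Definition closeN (N : nat) (x y : nat -> R) (r : R) : Prop :=
  forall k, (k < N)%nat -> Rabs (y k - x k) < r.

Definition UC (N : nat) (f : (nat -> R) -> R) : Prop :=
  forall eps, 0 < eps -> exists del, 0 < del /\
    forall x y, closeN N x y del -> Rabs (f y - f x) < eps.

Lemma closeN_upd N x y r j s : closeN N x y r -> closeN N (upd x j s) (upd y j s) r.
Proof. intros H k Hk. unfold upd. destruct (Nat.eq_dec k j).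
  - replace (s - s) with 0 by ring. rewrite Rabs_R0.
    specialize (H k Hk). pose proof (Rabs_pos (y k - x k)). lra.
  - apply H; auto. Qed.

Lemma closeN_upd2 N x r j s s' : 0 < r -> Rabs (s' - s) < r -> closeN N (upd x j s) (upd x j s') r.
Proof. intros Hr H k Hk. unfold upd. destruct (Nat.eq_dec k j); auto.
  replace (x k - x k) with 0 by ring. rewrite Rabs_R0; auto. Qed.

Lemma UC_upd N f j s : UC N f -> UC N (fun x => f (upd x j s)).
Proof. intros H eps He. destruct (H eps He) as [d [Hd Hf]]. exists d; split; auto.
  intros x y Hxy. apply Hf. apply closeN_upd; auto. Qed.

Lemma UC_lin N a b f g : UC N f -> UC N g -> UC N (fun x => a * f x + b * g x).
Proof. intros Hf Hg eps He.
  set (e := eps / (2 * (Rabs a + Rabs b + 1))).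
  assert (He' : 0 < e). { unfold e. apply Rdiv_lt_0_compat; auto.
    pose proof (Rabs_pos a); pose proof (Rabs_pos b); lra. }
  destruct (Hf e He') as [d1 [Hd1 H1]]. destruct (Hg e He') as [d2 [Hd2 H2]].
  exists (Rmin d1 d2); split. { apply Rmin_pos; auto. }
  intros x y Hxy.
  assert (A1 : Rabs (f y - f x) < e). { apply H1. intros k Hk. specialize (Hxy k Hk).
    pose proof (Rmin_l d1 d2); lra. }
  assert (A2 : Rabs (g y - g x) < e). { apply H2. intros k Hk. specialize (Hxy k Hk).
    pose proof (Rmin_r d1 d2); lra. }
  replace (a * f y + b * g y - (a * f x + b * g x)) with (a * (f y - f x) + b * (g y - g x)) by ring.
  eapply Rle_lt_trans. apply Rabs_triang. rewrite !Rabs_mult.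
  assert (Rabs a * Rabs (f y - f x) <= Rabs a * e).
  { apply Rmult_le_compat_l. apply Rabs_pos. lra. }
  assert (Rabs b * Rabs (g y - g x) <= Rabs b * e).
  { apply Rmult_le_compat_l. apply Rabs_pos. lra. }
  assert (Hee : (Rabs a + Rabs b) * e < eps).
  { unfold e. pose proof (Rabs_pos a); pose proof (Rabs_pos b).
    apply Rmult_lt_reg_r with (2 * (Rabs a + Rabs b + 1)). lra.
    field_simplify. nra. lra. }
  nra. Qed.

Lemma UC_const N c : UC N (fun _ => c).
Proof. intros eps He. exists 1; split; [lra|]. intros. replace (c - c) with 0 by ring.
  rewrite Rabs_R0; auto. Qed.

Lemma UC_abs N f : UC N f -> UC N (fun x => Rabs (f x)).
Proof. intros H eps He. destruct (H eps He) as [d [Hd Hf]]. exists d; split; auto.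
  intros x y Hxy. eapply Rle_lt_trans. apply Rabs_triang_inv2. apply Hf; auto. Qed.

Lemma UC_ext N f g : (forall x, f x = g x) -> UC N f -> UC N g.
Proof. intros E H. replace g with f; auto. apply functional_extensionality; auto. Qed.

Lemma DR_eq f a b : ex_RInt f a b -> Defs.RInt f a b = RInt f a b.
Proof. intros H. unfold Defs.RInt.
  destruct (excluded_middle_informative _) as [H1|H1].
  - destruct (constructive_indefinite_description _ _) as [pr Hpr]. simpl.
    symmetry. apply RInt_Reals.
  - exfalso. apply H1. exists (ex_RInt_Reals_0 _ _ _ H). auto. Qed.

Lemma cont_eps f x : (forall eps, 0 < eps -> exists del, 0 < del /\
   forall y, Rabs (y - x) < del -> Rabs (f y - f x) < eps) -> continuous f x.
Proof. intros H. apply continuity_pt_filterlim.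
  unfold continuity_pt, continue_in, limit1_in, limit_in. intros eps He.
  destruct (H eps He) as [d [Hd Hy]]. exists d; split; auto.
  intros y [_ Hy']. simpl in *. unfold R_dist in *. apply Hy; auto. Qed.

Definition LipAt (N m : nat) (M : R) : Prop := forall f g eps, UC N f -> UC N g ->
  (forall x, Rabs (f x - g x) <= eps) -> Rabs (intCube m M f - intCube m M g) <= (2 * M) ^ m * eps.

Lemma phi_cont N m M f j s0 : 0 <= M -> LipAt N m M -> UC N f ->
  continuous (fun s => intCube m M (fun x => f (upd x j s))) s0.
Proof. intros HM Hl Hf. apply cont_eps. intros eps He.
  assert (HC : 0 < (2 * M) ^ m + 1). { pose proof (pow_le (2*M) m ltac:(lra)). lra. }
  set (e := eps / (2 * ((2*M)^m + 1))).
  assert (He' : 0 < e) by (unfold e; apply Rdiv_lt_0_compat; lra).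
  destruct (Hf e He') as [d [Hd Hfd]]. exists d; split; auto.
  intros y Hy.
  assert (B : Rabs (intCube m M (fun x => f (upd x j y)) - intCube m M (fun x => f (upd x j s0))) <= (2*M)^m * e).
  { apply Hl; try apply UC_upd; auto. intros x. left. apply Hfd.
    apply closeN_upd2; auto. }
  eapply Rle_lt_trans. apply B. unfold e.
  pose proof (pow_le (2*M) m ltac:(lra)).
  apply Rle_lt_trans with (((2 * M) ^ m + 1) * (eps / (2 * ((2 * M) ^ m + 1)))).
  { apply Rmult_le_compat_r; [left; exact He'|lra]. }
  replace (((2 * M) ^ m + 1) * (eps / (2 * ((2 * M) ^ m + 1)))) with (eps / 2) by (field; lra).
  lra. Qed.

Lemma intCube_lip N M : 0 <= M -> forall m, LipAt N m M.
Proof. intros HM m. induction m as [|m IH]; intros f g eps Hf Hg H.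
  - simpl. rewrite Rmult_1_l. apply H.
  - simpl intCube.
    pose proof (fun s => phi_cont N m M f m s HM IH Hf) as Cf.
    pose proof (fun s => phi_cont N m M g m s HM IH Hg) as Cg.
    assert (Ef : ex_RInt (fun s => intCube m M (fun x => f (upd x m s))) (-M) M).
    { apply (@ex_RInt_continuous R_CompleteNormedModule); auto. }
    assert (Eg : ex_RInt (fun s => intCube m M (fun x => g (upd x m s))) (-M) M).
    { apply (@ex_RInt_continuous R_CompleteNormedModule); auto. }
    rewrite !DR_eq; auto.
    replace (RInt (fun s => intCube m M (fun x => f (upd x m s))) (- M) M -
      RInt (fun s => intCube m M (fun x => g (upd x m s))) (- M) M) with
      (minus (RInt (fun s => intCube m M (fun x => f (upd x m s))) (- M) M)
      (RInt (fun s => intCube m M (fun x => g (upd x m s))) (- M) M)) by reflexivity.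
    rewrite <- (RInt_minus _ _ _ _ Ef Eg).
    replace ((2 * M) ^ S m * eps) with ((M - - M) * ((2*M)^m * eps)) by (simpl; ring).
    apply abs_RInt_le_const. lra. apply ex_RInt_minus; auto.
    intros t _. apply IH; try apply UC_upd; auto. Qed.

Lemma ex_Phi N m M f j : 0 <= M -> UC N f -> forall a b,
  ex_RInt (fun s => intCube m M (fun x => f (upd x j s))) a b.
Proof. intros HM Hf a b. apply (@ex_RInt_continuous R_CompleteNormedModule). intros z _.
  apply (phi_cont N); auto. apply intCube_lip; auto. Qed.

Lemma RInt_lin2 (f g : R -> R) a b c1 c2 : ex_RInt f a b -> ex_RInt g a b ->
  RInt (fun x => c1 * f x + c2 * g x) a b = c1 * RInt f a b + c2 * RInt g a b.
Proof. intros [If Hf] [Ig Hg]. apply is_RInt_unique.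
  rewrite (is_RInt_unique _ _ _ _ Hf), (is_RInt_unique _ _ _ _ Hg).
  apply (is_RInt_plus (fun x => c1 * f x) (fun x => c2 * g x)).
  apply (is_RInt_scal f). exact Hf. apply (is_RInt_scal g). exact Hg. Qed.
Lemma ex_RInt_lin2 (f g : R -> R) a b c1 c2 : ex_RInt f a b -> ex_RInt g a b ->
  ex_RInt (fun x => c1 * f x + c2 * g x) a b.
Proof. intros H1 H2. apply (ex_RInt_plus (fun x => c1 * f x) (fun x => c2 * g x)).
  apply (ex_RInt_scal f); auto. apply (ex_RInt_scal g); auto. Qed.

Lemma intCube_lin N M : 0 <= M -> forall m a b f g, UC N f -> UC N g ->
  intCube m M (fun x => a * f x + b * g x) = a * intCube m M f + b * intCube m M g.
Proof. intros HM m. induction m as [|m IH]; intros a b f g Hf Hg.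
  - reflexivity.
  - simpl intCube.
    assert (E : (fun s => intCube m M (fun x => a * f (upd x m s) + b * g (upd x m s))) =
                (fun s => a * (intCube m M (fun x => f (upd x m s))) +
                          b * (intCube m M (fun x => g (upd x m s))))).
    { apply functional_extensionality; intro s. rewrite IH; try apply UC_upd; auto. }
    rewrite E.
    pose proof (ex_Phi N m M f m HM Hf (-M) M). pose proof (ex_Phi N m M g m HM Hg (-M) M).
    rewrite !DR_eq; auto.
    + apply RInt_lin2; auto.
    + apply ex_RInt_lin2; auto. Qed.

Lemma intCube_le N M : 0 <= M -> forall m f g, UC N f -> UC N g ->
  (forall x, f x <= g x) -> intCube m M f <= intCube m M g.
Proof. intros HM m. induction m as [|m IH]; intros f g Hf Hg H.
  - apply H.
  - simpl intCube. rewrite !DR_eq; try (apply (ex_Phi N); auto).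
    apply RInt_le; [lra|apply (ex_Phi N); auto|apply (ex_Phi N); auto|].
    intros s _. apply IH; try apply UC_upd; auto. Qed.

Lemma intCube_zero M : forall m, intCube m M (fun _ => 0) = 0.
Proof. intro m. induction m as [|m IH]. reflexivity. simpl.
  rewrite IH. rewrite DR_eq by apply ex_RInt_const. rewrite RInt_const.
  unfold scal; simpl; unfold mult; simpl. ring. Qed.


Lemma pd_eq_of k f x l : pder k f x l -> pd k f x = l.
Proof. intros H. unfold pd. destruct (excluded_middle_informative _) as [H1|H1].
  - destruct (constructive_indefinite_description _ _) as [l' Hl']. simpl.
    unfold pder in *. eapply uniqueness_limite; eauto.
  - exfalso; apply H1; eauto. Qed.

Lemma line_deriv k F x t : pder k F (upd x k t) (pd k F (upd x k t)) ->
  derivable_pt_lim (fun s => F (upd x k s)) t (pd k F (upd x k t)).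
Proof. unfold pder. rewrite upd_same.
  replace (fun s => F (upd (upd x k t) k s)) with (fun s => F (upd x k s)); auto.
  apply functional_extensionality; intro s. rewrite upd_upd_same; auto. Qed.

Lemma mvt_line k F x s h : (forall y, pder k F y (pd k F y)) ->
  exists c, Rabs (c - s) <= Rabs h /\
    F (upd x k (s + h)) - F (upd x k s) = pd k F (upd x k c) * h.
Proof. intros HD.
  assert (D : forall t, derivable_pt_lim (fun s => F (upd x k s)) t (pd k F (upd x k t))).
  { intro t. apply line_deriv; auto. }
  destruct (MVT_gen (fun s => F (upd x k s)) s (s + h) (fun t => pd k F (upd x k t))) as [c [Hc E]].
  - intros t _. apply is_derive_Reals; auto.
  - intros t _. apply derivable_continuous_pt. exists (pd k F (upd x k t)). apply D.
  - exists c. split.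
    + revert Hc. unfold Rmin, Rmax. destruct (Rle_dec s (s+h)); intros Hc;
      unfold Rabs; destruct (Rcase_abs (c - s)); destruct (Rcase_abs h); lra.
    + rewrite E. ring. Qed.

Lemma intCube_deriv N M m F k s : 0 <= M -> UC N F -> UC N (pd k F) ->
  (forall x, pder k F x (pd k F x)) ->
  derivable_pt_lim (fun s => intCube m M (fun x => F (upd x k s))) s
                   (intCube m M (fun x => pd k F (upd x k s))).
Proof. intros HM HF HpF HD eps He.
  assert (HC : 0 < (2 * M) ^ m + 1) by (pose proof (pow_le (2*M) m ltac:(lra)); lra).
  set (e := eps / (2 * ((2*M)^m + 1))).
  assert (He' : 0 < e) by (unfold e; apply Rdiv_lt_0_compat; lra).
  destruct (HpF e He') as [d [Hd Hfd]].
  exists (mkposreal d Hd). intros h Hh0 Hh. simpl in Hh.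
  set (DQ := fun x => (/ h) * F (upd x k (s + h)) + (- / h) * F (upd x k s)).
  assert (E : (intCube m M (fun x => F (upd x k (s + h))) - intCube m M (fun x => F (upd x k s))) / h
              = intCube m M DQ).
  { unfold DQ. rewrite (intCube_lin N); try apply UC_upd; auto. field; auto. }
  rewrite E.
  assert (B : Rabs (intCube m M DQ - intCube m M (fun x => pd k F (upd x k s))) <= (2*M)^m * e).
  { apply (intCube_lip N M HM m).
    - unfold DQ. apply UC_lin; apply UC_upd; auto.
    - apply UC_upd; auto.
    - intros x. destruct (mvt_line k F x s h HD) as [c [Hc Ec]].
      unfold DQ. replace (/ h * F (upd x k (s + h)) + - / h * F (upd x k s)) with
        ((F (upd x k (s + h)) - F (upd x k s)) / h) by (field; auto).
      rewrite Ec. replace (pd k F (upd x k c) * h / h) with (pd k F (upd x k c)) by (field; auto).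
      left. apply Hfd.
      apply closeN_upd2; auto. lra. }
  eapply Rle_lt_trans. apply B. unfold e.
  pose proof (pow_le (2*M) m ltac:(lra)).
  apply Rle_lt_trans with (((2 * M) ^ m + 1) * (eps / (2 * ((2 * M) ^ m + 1)))).
  { apply Rmult_le_compat_r; [left; exact He'|lra]. }
  replace (((2 * M) ^ m + 1) * (eps / (2 * ((2 * M) ^ m + 1)))) with (eps / 2) by (field; lra).
  lra. Qed.

Lemma pd_upd_comm k j s F x : j <> k -> (forall y, pder k F y (pd k F y)) ->
  pder k (fun y => F (upd y j s)) x (pd k F (upd x j s)).
Proof. intros Hjk H. specialize (H (upd x j s)). unfold pder in *.
  rewrite upd_other in H by auto.
  replace (fun t => F (upd (upd x k t) j s)) with (fun t => F (upd (upd x j s) k t)); auto.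
  apply functional_extensionality; intro t. rewrite upd_comm; auto. Qed.

Lemma DRInt_zero a b : Defs.RInt (fun _ => 0) a b = 0.
Proof. rewrite DR_eq by apply ex_RInt_const. rewrite RInt_const.
  unfold scal; simpl; unfold mult; simpl. ring. Qed.

Lemma intCube_pd_zero N M k : 0 <= M -> forall m, (k < m)%nat -> forall F, UC N F -> UC N (pd k F) ->
  (forall x, pder k F x (pd k F x)) -> (forall x, F (upd x k M) = 0) ->
  (forall x, F (upd x k (-M)) = 0) -> intCube m M (pd k F) = 0.
Proof. intros HM m. induction m as [|m IH]; intros Hkm F HF HpF HD H1 H2.
  - lia.
  - simpl intCube. destruct (Nat.eq_dec k m) as [->|Hne].
    + rewrite DR_eq by (apply (ex_Phi N); auto).
      apply is_RInt_unique.
      replace 0 with (minus (intCube m M (fun x => F (upd x m M)))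
                            (intCube m M (fun x => F (upd x m (-M))))).
      * apply (is_RInt_derive (fun s => intCube m M (fun x => F (upd x m s)))).
        -- intros t _. apply is_derive_Reals. apply (intCube_deriv N); auto.
        -- intros t _. apply (phi_cont N); auto. apply intCube_lip; auto.
      * replace (fun x => F (upd x m M)) with (fun _ : nat -> R => 0)
          by (apply functional_extensionality; intro; rewrite H1; auto).
        replace (fun x => F (upd x m (-M))) with (fun _ : nat -> R => 0)
          by (apply functional_extensionality; intro; rewrite H2; auto).
        rewrite intCube_zero. unfold minus, plus, opp; simpl. ring.
    + assert (Hk : (k < m)%nat) by lia.
      replace (fun s => intCube m M (fun x => pd k F (upd x m s))) with (fun _ : R => 0).
      apply DRInt_zero.
      apply functional_extensionality; intro s.
      assert (E : (fun x => pd k F (upd x m s)) = pd k (fun y => F (upd y m s))).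
      { apply functional_extensionality; intro x. symmetry. apply pd_eq_of.
        apply pd_upd_comm; auto. }
      rewrite E. symmetry. apply IH; auto.
      * apply UC_upd; auto.
      * rewrite <- E. apply UC_upd; auto.
      * intros x. rewrite <- E. apply pd_upd_comm; auto.
      * intros x. rewrite upd_comm by auto. apply H1.
      * intros x. rewrite upd_comm by auto. apply H2. Qed.

Definition suppb (m : nat) (R0 : R) (f : (nat -> R) -> R) : Prop :=
  forall x, f x <> 0 -> forall k, (k < m)%nat -> Rabs (x k) <= R0.

Lemma RInt_zero_out (g : R -> R) a b : (forall x, a < x < b -> g x = 0) -> a <= b -> RInt g a b = 0.
Proof. intros H Hab. rewrite (RInt_ext g (fun _ => 0)).
  rewrite RInt_const. unfold scal; simpl; unfold mult; simpl; ring.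
  intros x Hx. rewrite Rmin_left in Hx by auto. rewrite Rmax_right in Hx by auto. auto. Qed.

Lemma intCube_stable_le N R0 : 0 <= R0 -> forall m f M M', R0 <= M -> M <= M' -> UC N f -> suppb m R0 f ->
  intCube m M' f = intCube m M f.
Proof. intros HR m. induction m as [|m IH]; intros f M M' HM HM' Hf Hs.
  - reflexivity.
  - simpl intCube.
    assert (S1 : forall s, suppb m R0 (fun x => f (upd x m s))).
    { intros s x Hx k Hk. specialize (Hs _ Hx k ltac:(lia)). rewrite upd_other in Hs by lia. auto. }
    replace (fun s => intCube m M' (fun x => f (upd x m s))) with
            (fun s => intCube m M (fun x => f (upd x m s))).
    2:{ apply functional_extensionality; intro s. symmetry. apply IH; auto. apply UC_upd; auto. }
    set (Phi := fun s => intCube m M (fun x => f (upd x m s))).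
    assert (Z : forall s, R0 < Rabs s -> Phi s = 0).
    { intros s Hs'. unfold Phi.
      replace (fun x => f (upd x m s)) with (fun _ : nat -> R => 0). apply intCube_zero.
      apply functional_extensionality; intro x. destruct (Req_dec (f (upd x m s)) 0) as [E|E]; auto.
      specialize (Hs _ E m ltac:(lia)). rewrite upd_same in Hs. lra. }
    assert (EX : forall a b, ex_RInt Phi a b). { intros; apply (ex_Phi N); [lra|auto]. }
    rewrite !DR_eq by auto.
    rewrite <- (RInt_Chasles Phi (-M') (-M) M') by auto.
    rewrite <- (RInt_Chasles Phi (-M) M M') by auto.
    rewrite (RInt_zero_out Phi (-M') (-M)).
    rewrite (RInt_zero_out Phi M M').
    unfold plus; simpl. ring.
    + intros x Hx. apply Z. unfold Rabs; destruct (Rcase_abs x); lra.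
    + lra.
    + intros x Hx. apply Z. unfold Rabs; destruct (Rcase_abs x); lra.
    + lra. Qed.

Lemma intCube_stable N R0 m f M M' : 0 <= R0 -> R0 <= M -> R0 <= M' -> UC N f -> suppb m R0 f ->
  intCube m M' f = intCube m M f.
Proof. intros. destruct (Rle_dec M M').
  - apply (intCube_stable_le N R0); auto.
  - symmetry. apply (intCube_stable_le N R0); auto; lra. Qed.

Lemma integralRN_eq N R0 M f : 0 <= R0 -> R0 <= M -> UC N f -> suppb N R0 f ->
  integralRN N f = intCube N M f.
Proof. intros HR HM Hf Hs.
  assert (C : Un_cv (fun m => intCube N (INR m) f) (intCube N M f)).
  { destruct (INR_unbounded M) as [m0 Hm0]. intros eps He. exists m0. intros m Hm.
    unfold R_dist. rewrite (intCube_stable N R0 N f M (INR m)); auto.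
    replace (intCube N M f - intCube N M f) with 0 by ring. rewrite Rabs_R0; auto.
    apply le_INR in Hm. lra. }
  unfold integralRN. destruct (excluded_middle_informative _) as [H|H].
  - destruct (constructive_indefinite_description _ _) as [l Hl]. simpl.
    eapply UL_sequence; eauto.
  - exfalso; apply H; eauto. Qed.

Lemma pder_pd k f x : (exists l, pder k f x l) -> pder k f x (pd k f x).
Proof. intros H. unfold pd. destruct (excluded_middle_informative _) as [H1|H1].
  - destruct (constructive_indefinite_description _ _) as [l' Hl']. simpl. auto.
  - contradiction. Qed.


Definition inbox (N : nat) (lo hi x : nat -> R) : Prop :=
  forall k, (k < N)%nat -> lo k <= x k <= hi k.

Lemma halve_step N (L : (nat -> R) -> (nat -> R) -> Prop)
  (HU : forall lo hi j m, (j < N)%nat -> lo j <= m -> m <= hi j ->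
          L lo (upd hi j m) -> L (upd lo j m) hi -> L lo hi) :
  forall lo hi, ~ L lo hi -> (forall k, (k < N)%nat -> lo k <= hi k) ->
  forall m, exists lo' hi', ~ L lo' hi' /\ forall k, (k < N)%nat ->
    lo k <= lo' k /\ lo' k <= hi' k /\ hi' k <= hi k /\
    ((k < m)%nat -> hi' k - lo' k = (hi k - lo k) / 2) /\
    ((m <= k)%nat -> lo' k = lo k /\ hi' k = hi k).
Proof. intros lo hi HnL Hord m. induction m as [|m IH].
  - exists lo, hi. split; [exact HnL|]. intros k Hk. pose proof (Hord k Hk).
    repeat split; try lra; intros; lia.
  - destruct IH as [lo' [hi' [HnL' Hb]]].
    destruct (Nat.lt_ge_cases m N) as [HmN|HmN].
    + set (mid := (lo' m + hi' m) / 2).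
      destruct (Hb m HmN) as [B1 [B2 [B3 [_ B5]]]].
      destruct (B5 (le_n m)) as [E1 E2].
      assert (D : ~ L lo' (upd hi' m mid) \/ ~ L (upd lo' m mid) hi').
      { apply not_and_or. intros [C1 C2]. apply HnL'. apply (HU _ _ m mid); auto; unfold mid; lra. }
      destruct D as [D|D].
      * exists lo', (upd hi' m mid). split; auto. intros k Hk.
        destruct (Hb k Hk) as [C1 [C2 [C3 [C4 C5]]]].
        destruct (Nat.eq_dec k m) as [->|Hne].
        -- rewrite upd_same. unfold mid. repeat split; intros; try lia; try lra.
        -- rewrite upd_other by auto. repeat split; intros; try lra;
           try (apply C4; lia); try (apply C5; lia).
      * exists (upd lo' m mid), hi'. split; auto. intros k Hk.
        destruct (Hb k Hk) as [C1 [C2 [C3 [C4 C5]]]].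
        destruct (Nat.eq_dec k m) as [->|Hne].
        -- rewrite upd_same. unfold mid. repeat split; intros; try lia; try lra.
        -- rewrite upd_other by auto. repeat split; intros; try lra;
           try (apply C4; lia); try (apply C5; lia).
    + exists lo', hi'. split; auto. intros k Hk.
      destruct (Hb k Hk) as [C1 [C2 [C3 [C4 C5]]]]. repeat split; intros; auto;
      try (apply C4; lia); lia. Qed.

Definition Pstep N (L : (nat -> R) -> (nat -> R) -> Prop) (b b' : (nat -> R) * (nat -> R)) : Prop :=
  ~ L (fst b') (snd b') /\ forall k, (k < N)%nat ->
    fst b k <= fst b' k /\ fst b' k <= snd b' k /\ snd b' k <= snd b k /\
    snd b' k - fst b' k = (snd b k - fst b k) / 2.

Definition nextb N L (b : (nat -> R) * (nat -> R)) : (nat -> R) * (nat -> R) :=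
  match excluded_middle_informative (exists b', Pstep N L b b') with
  | left H => proj1_sig (constructive_indefinite_description _ H)
  | right _ => b
  end.

Fixpoint seqb N L b0 (t : nat) : (nat -> R) * (nat -> R) :=
  match t with O => b0 | S t' => nextb N L (seqb N L b0 t') end.

Lemma pow2_ge_INR t : INR t <= 2 ^ t.
Proof. induction t. simpl; lra. rewrite S_INR. simpl.
  assert (1 <= 2 ^ t) by (apply pow_R1_Rle; lra). lra. Qed.

Lemma sumN_ge_term (f : nat -> R) N k : (forall j, (j < N)%nat -> 0 <= f j) -> (k < N)%nat -> f k <= sumN N f.
Proof. induction N as [|N IH]; intros H Hk. lia. simpl.
  destruct (Nat.eq_dec k N) as [->|Hne].
  - assert (0 <= sumN N f). { clear IH Hk. induction N. simpl; lra. simpl.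
      pose proof (H N ltac:(lia)). assert (0 <= sumN N f) by (apply IHN; intros; apply H; lia). lra. }
    lra.
  - pose proof (H N ltac:(lia)). assert (f k <= sumN N f) by (apply IH; auto; lia). lra. Qed.

Lemma cousin N (L : (nat -> R) -> (nat -> R) -> Prop)
  (HU : forall lo hi j m, (j < N)%nat -> lo j <= m -> m <= hi j ->
          L lo (upd hi j m) -> L (upd lo j m) hi -> L lo hi)
  (HL : forall z, exists r, 0 < r /\ forall lo hi, inbox N lo hi z ->
          (forall k, (k < N)%nat -> hi k - lo k < r) -> L lo hi) :
  forall lo hi, (forall k, (k < N)%nat -> lo k <= hi k) -> L lo hi.
Proof. intros lo0 hi0 Hord0. apply NNPP. intros HnL0.
  set (b0 := (lo0, hi0)).
  assert (Inv : forall t, ~ L (fst (seqb N L b0 t)) (snd (seqb N L b0 t)) /\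
                 Pstep N L (seqb N L b0 t) (seqb N L b0 (S t))).
  { assert (G : forall b, ~ L (fst b) (snd b) -> (forall k, (k < N)%nat -> fst b k <= snd b k) ->
                  Pstep N L b (nextb N L b)).
    { intros b Hb Ho. unfold nextb. destruct (excluded_middle_informative _) as [H|H].
      - destruct (constructive_indefinite_description _ _) as [b' Hb']. simpl. auto.
      - exfalso. apply H. destruct (halve_step N L HU (fst b) (snd b) Hb Ho N) as [lo' [hi' [Hn Hk]]].
        exists (lo', hi'). split; auto. intros k Hk'. simpl. destruct (Hk k Hk') as [C1 [C2 [C3 [C4 _]]]].
        repeat split; auto. }
    intro t. induction t as [|t IH].
    - assert (H : ~ L (fst b0) (snd b0)) by auto. split; [exact H|].
      change (seqb N L b0 1) with (nextb N L b0). change (seqb N L b0 0) with b0.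
      apply G; auto.
    - destruct IH as [IH1 IH2]. destruct IH2 as [IH2a IH2b]. split; [exact IH2a|].
      change (seqb N L b0 (S (S t))) with (nextb N L (seqb N L b0 (S t))).
      apply G; auto. intros k Hk. destruct (IH2b k Hk) as [_ [C _]]. auto. }
  set (lo := fun t => fst (seqb N L b0 t)). set (hi := fun t => snd (seqb N L b0 t)).
  assert (Step : forall t k, (k < N)%nat -> lo t k <= lo (S t) k /\ lo (S t) k <= hi (S t) k /\
                  hi (S t) k <= hi t k /\ hi (S t) k - lo (S t) k = (hi t k - lo t k) / 2).
  { intros t k Hk. destruct (Inv t) as [_ [_ H]]. apply H; auto. }
  assert (Ord : forall t k, (k < N)%nat -> lo t k <= hi t k).
  { intros [|t] k Hk. apply Hord0; auto. apply Step; auto. }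
  assert (Mlo : forall t j k, (k < N)%nat -> lo t k <= lo (t + j)%nat k).
  { intros t j k Hk. induction j. rewrite Nat.add_0_r; lra.
    rewrite Nat.add_succ_r. pose proof (Step (t + j)%nat k Hk). lra. }
  assert (Mhi : forall t j k, (k < N)%nat -> hi (t + j)%nat k <= hi t k).
  { intros t j k Hk. induction j. rewrite Nat.add_0_r; lra.
    rewrite Nat.add_succ_r. pose proof (Step (t + j)%nat k Hk). lra. }
  assert (Cross : forall t s k, (k < N)%nat -> lo t k <= hi s k).
  { intros t s k Hk. destruct (Nat.le_ge_cases t s) as [H|H].
    - replace s with (t + (s - t))%nat by lia. pose proof (Mlo t (s - t)%nat k Hk).
      pose proof (Ord (t + (s - t))%nat k Hk). lra.
    - replace t with (s + (t - s))%nat by lia. pose proof (Mhi s (t - s)%nat k Hk).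
      pose proof (Ord (s + (t - s))%nat k Hk). lra. }
  assert (Wid : forall t k, (k < N)%nat -> hi t k - lo t k = (hi0 k - lo0 k) / 2 ^ t).
  { intros t k Hk. induction t. simpl. unfold hi, lo; simpl. field.
    destruct (Step t k Hk) as [_ [_ [_ E]]]. rewrite E, IHt. simpl. field.
    apply pow_nonzero; lra. }
  assert (Ex : forall k, (k < N)%nat -> exists l, Un_cv (fun t => lo t k) l).
  { intros k Hk. destruct (growing_cv (fun t => lo t k)) as [l Hl].
    - intros t. apply Step; auto.
    - exists (hi 0%nat k). intros x [t ->]. apply Cross; auto.
    - exists l; auto. }
  set (z := fun k => match excluded_middle_informative (exists l, Un_cv (fun t => lo t k) l) with
                     | left H => proj1_sig (constructive_indefinite_description _ H)
                     | right _ => 0 end).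
  assert (Zc : forall k, (k < N)%nat -> Un_cv (fun t => lo t k) (z k)).
  { intros k Hk. unfold z. destruct (excluded_middle_informative _) as [H|H].
    - destruct (constructive_indefinite_description _ _) as [l Hl]. simpl. auto.
    - exfalso; apply H; auto. }
  assert (Zin : forall t, inbox N (lo t) (hi t) z).
  { intros t k Hk. split.
    - apply (growing_ineq (fun t => lo t k)); auto. intros s. apply Step; auto.
    - destruct (Rle_dec (z k) (hi t k)) as [H|H]; auto. exfalso.
      destruct (Zc k Hk (z k - hi t k)) as [s Hs]. lra.
      specialize (Hs s (le_n s)). unfold R_dist in Hs. pose proof (Cross s t k Hk).
      unfold Rabs in Hs. destruct (Rcase_abs (lo s k - z k)); lra. }
  destruct (HL z) as [r [Hr Hz]].
  set (S := sumN N (fun k => hi0 k - lo0 k) + 1).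
  assert (HS : forall k, (k < N)%nat -> hi0 k - lo0 k < S).
  { intros k Hk. unfold S. pose proof (sumN_ge_term (fun k => hi0 k - lo0 k) N k).
    assert (hi0 k - lo0 k <= sumN N (fun k => hi0 k - lo0 k)).
    { apply H; auto. intros j Hj. pose proof (Hord0 j Hj). lra. } lra. }
  assert (HS0 : 0 < S). { unfold S. assert (0 <= sumN N (fun k => hi0 k - lo0 k)).
    { clear - Hord0. induction N. simpl; lra. simpl.
      pose proof (Hord0 N ltac:(lia)). assert (0 <= sumN N (fun k => hi0 k - lo0 k)).
      apply IHN. intros; apply Hord0; lia. lra. } lra. }
  destruct (INR_unbounded (S / r)) as [t Ht].
  apply (proj1 (Inv t)). apply Hz. apply Zin.
  intros k Hk. fold (hi t) (lo t). rewrite Wid by auto.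
  pose proof (pow2_ge_INR t). assert (0 < 2 ^ t) by (apply pow_lt; lra).
  apply Rmult_lt_reg_r with (2 ^ t); auto.
  replace ((hi0 k - lo0 k) / 2 ^ t * 2 ^ t) with (hi0 k - lo0 k) by (field; lra).
  pose proof (HS k Hk).
  assert (S < r * INR t). { apply Rmult_lt_reg_r with (/ r). apply Rinv_0_lt_compat; auto.
    replace (r * INR t * / r) with (INR t) by (field; lra). unfold Rdiv in Ht. lra. }
  nra. Qed.

Lemma inbox_split N lo hi j m x : inbox N lo hi x ->
  inbox N lo (upd hi j m) x \/ inbox N (upd lo j m) hi x.
Proof. intros H. destruct (Rle_dec (x j) m) as [Hm|Hm].
  - left. intros k Hk. destruct (H k Hk). unfold upd. destruct (Nat.eq_dec k j); subst; split; auto.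
  - right. intros k Hk. destruct (H k Hk). unfold upd. destruct (Nat.eq_dec k j); subst; split; auto; lra. Qed.

Lemma UC_of_cont N R0 f : 0 <= R0 -> contN N f -> suppb N R0 f -> UC N f.
Proof. intros HR Hc Hs eps He.
  set (L := fun lo hi => exists del, 0 < del /\ forall x y, inbox N lo hi x -> closeN N x y del ->
                 Rabs (f y - f x) < eps).
  assert (HL : forall lo hi, (forall k, (k < N)%nat -> lo k <= hi k) -> L lo hi).
  { apply cousin.
    - intros lo hi j m Hj H1 H2 [d1 [Hd1 L1]] [d2 [Hd2 L2]].
      exists (Rmin d1 d2). split. apply Rmin_pos; auto.
      intros x y Hx Hxy. destruct (inbox_split N lo hi j m x Hx) as [B|B].
      + apply L1; auto. intros k Hk. specialize (Hxy k Hk). pose proof (Rmin_l d1 d2). lra.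
      + apply L2; auto. intros k Hk. specialize (Hxy k Hk). pose proof (Rmin_r d1 d2). lra.
    - intros z. destruct (Hc z (eps / 2) ltac:(lra)) as [d [Hd Hz]].
      exists (d / 2). split. lra. intros lo hi Hin Hw.
      exists (d / 2). split. lra. intros x y Hx Hxy.
      assert (A1 : Rabs (f x - f z) < eps / 2).
      { apply Hz. intros k Hk. destruct (Hx k Hk), (Hin k Hk). specialize (Hw k Hk).
        unfold Rabs; destruct (Rcase_abs (x k - z k)); lra. }
      assert (A2 : Rabs (f y - f z) < eps / 2).
      { apply Hz. intros k Hk. destruct (Hx k Hk), (Hin k Hk). specialize (Hw k Hk).
        specialize (Hxy k Hk). revert Hxy.
        unfold Rabs; destruct (Rcase_abs (y k - z k)); destruct (Rcase_abs (y k - x k)); lra. }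
      replace (f y - f x) with ((f y - f z) - (f x - f z)) by ring.
      eapply Rle_lt_trans. apply Rabs_triang. rewrite Rabs_Ropp. lra. }
  destruct (HL (fun _ => - (R0 + 1)) (fun _ => R0 + 1)) as [d [Hd Hb]].
  { intros; lra. }
  exists (Rmin d 1). split. apply Rmin_pos; lra.
  intros x y Hxy.
  assert (Hxy' : closeN N x y d). { intros k Hk. specialize (Hxy k Hk). pose proof (Rmin_l d 1). lra. }
  destruct (Req_dec (f x) 0) as [Ex|Ex].
  - destruct (Req_dec (f y) 0) as [Ey|Ey].
    + rewrite Ex, Ey. replace (0 - 0) with 0 by ring. rewrite Rabs_R0; auto.
    + rewrite <- Rabs_Ropp. replace (- (f y - f x)) with (f x - f y) by ring.
      apply Hb. intros k Hk. specialize (Hs y Ey k Hk). unfold Rabs in Hs. destruct (Rcase_abs (y k)); split; lra.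
      intros k Hk. specialize (Hxy' k Hk). rewrite <- Rabs_Ropp. replace (- (x k - y k)) with (y k - x k) by ring. auto.
  - apply Hb; auto. intros k Hk. specialize (Hs x Ex k Hk). unfold Rabs in Hs. destruct (Rcase_abs (x k)); split; lra. Qed.

Lemma pos_lower N (K : (nat -> R) -> Prop) (g : (nat -> R) -> R) :
  contN N g -> closedN N K -> boundedN N K -> (forall x, K x -> 0 < g x) ->
  exists c, 0 < c /\ forall x, K x -> c <= g x.
Proof. intros Hc HK [R1 HB] Hp.
  set (L := fun lo hi => exists c, 0 < c /\ forall x, inbox N lo hi x -> K x -> c <= g x).
  assert (HL : forall lo hi, (forall k, (k < N)%nat -> lo k <= hi k) -> L lo hi).
  { apply cousin.
    - intros lo hi j m Hj H1 H2 [d1 [Hd1 L1]] [d2 [Hd2 L2]].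
      exists (Rmin d1 d2). split. apply Rmin_pos; auto.
      intros x Hx HKx. destruct (inbox_split N lo hi j m x Hx) as [B|B].
      + pose proof (Rmin_l d1 d2). pose proof (L1 x B HKx). lra.
      + pose proof (Rmin_r d1 d2). pose proof (L2 x B HKx). lra.
    - intros z. destruct (classic (K z)) as [Kz|Kz].
      + pose proof (Hp z Kz). destruct (Hc z (g z / 2) ltac:(lra)) as [d [Hd Hz]].
        exists d. split; auto. intros lo hi Hin Hw. exists (g z / 2). split. lra.
        intros x Hx _. assert (A : Rabs (g x - g z) < g z / 2).
        { apply Hz. intros k Hk. destruct (Hx k Hk), (Hin k Hk). specialize (Hw k Hk).
          unfold Rabs; destruct (Rcase_abs (x k - z k)); lra. }
        unfold Rabs in A; destruct (Rcase_abs (g x - g z)); lra.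
      + assert (E : exists e, 0 < e /\ forall eta, K eta -> ~ (forall k, (k < N)%nat -> Rabs (eta k - z k) < e)).
        { apply NNPP. intros Hn. apply Kz. apply HK. intros e He. apply NNPP. intros Hn2. apply Hn.
          exists e. split; auto. intros eta Heta Hcl. apply Hn2. exists eta. split; auto. }
        destruct E as [e [He HE]]. exists e. split; auto. intros lo hi Hin Hw.
        exists 1. split. lra. intros x Hx HKx. exfalso. apply (HE x HKx).
        intros k Hk. destruct (Hx k Hk), (Hin k Hk). specialize (Hw k Hk).
        unfold Rabs; destruct (Rcase_abs (x k - z k)); lra. }
  destruct (HL (fun _ => - Rabs R1) (fun _ => Rabs R1)) as [c [Hc0 Hcb]].
  { intros. pose proof (Rabs_pos R1). lra. }
  exists c. split; auto. intros x Kx. apply Hcb; auto. intros k Hk. specialize (HB x Kx k Hk).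
  pose proof (Rle_abs R1). unfold Rabs in *. destruct (Rcase_abs (x k)); destruct (Rcase_abs R1); split; lra. Qed.


Definition contAt (N : nat) (f : (nat -> R) -> R) (x : nat -> R) : Prop :=
  forall eps, 0 < eps -> exists del, 0 < del /\
    forall y, closeN N x y del -> Rabs (f y - f x) < eps.

Definition cont1 (phi : R -> R) (z : R) : Prop :=
  forall eps, 0 < eps -> exists del, 0 < del /\
    forall w, Rabs (w - z) < del -> Rabs (phi w - phi z) < eps.

Lemma contN_contAt N f : contN N f <-> forall x, contAt N f x.
Proof. split; intros H x; exact (H x). Qed.

Lemma cont1_of_contpt phi z : continuity_pt phi z -> cont1 phi z.
Proof. intros H eps He. unfold continuity_pt, continue_in, limit1_in, limit_in in H.
  destruct (H eps He) as [d [Hd Hw]]. exists d. split; auto. intros w Hw'.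
  destruct (Req_dec w z) as [->|Hne].
  - replace (phi z - phi z) with 0 by ring. rewrite Rabs_R0; auto.
  - apply (Hw w). split. split. exact I. auto. exact Hw'. Qed.

Lemma cont1_of_deriv phi z l : derivable_pt_lim phi z l -> cont1 phi z.
Proof. intros H. apply cont1_of_contpt. apply derivable_continuous_pt. exists l; auto. Qed.

Lemma cont1_local phi psi z : (exists r, 0 < r /\ forall w, Rabs (w - z) < r -> phi w = psi w) ->
  cont1 psi z -> cont1 phi z.
Proof. intros [r [Hr E]] H eps He. destruct (H eps He) as [d [Hd Hw]].
  exists (Rmin d r). split. apply Rmin_pos; auto. intros w Hw'.
  rewrite (E w), (E z). apply Hw. pose proof (Rmin_l d r); lra.
  rewrite Rminus_eq_0, Rabs_R0; auto. pose proof (Rmin_r d r); lra. Qed.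

Lemma contAt_const N c x : contAt N (fun _ => c) x.
Proof. intros eps He. exists 1. split. lra. intros. rewrite Rminus_eq_0, Rabs_R0; auto. Qed.

Lemma contAt_coord N k x : (k < N)%nat -> contAt N (fun y => y k) x.
Proof. intros Hk eps He. exists eps. split; [exact He|]. intros y Hy. apply Hy; auto. Qed.

Lemma contAt_plus N f g x : contAt N f x -> contAt N g x -> contAt N (fun y => f y + g y) x.
Proof. intros Hf Hg eps He. destruct (Hf (eps/2) ltac:(lra)) as [d1 [Hd1 H1]].
  destruct (Hg (eps/2) ltac:(lra)) as [d2 [Hd2 H2]].
  exists (Rmin d1 d2). split. apply Rmin_pos; auto. intros y Hy.
  assert (A1 : Rabs (f y - f x) < eps / 2). { apply H1. intros k Hk. specialize (Hy k Hk). pose proof (Rmin_l d1 d2). lra. }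
  assert (A2 : Rabs (g y - g x) < eps / 2). { apply H2. intros k Hk. specialize (Hy k Hk). pose proof (Rmin_r d1 d2). lra. }
  replace (f y + g y - (f x + g x)) with ((f y - f x) + (g y - g x)) by ring.
  eapply Rle_lt_trans. apply Rabs_triang. lra. Qed.

Lemma contAt_mult N f g x : contAt N f x -> contAt N g x -> contAt N (fun y => f y * g y) x.
Proof. intros Hf Hg eps He.
  set (C := Rabs (f x) + Rabs (g x) + 1).
  assert (HC : 1 <= C). { unfold C. pose proof (Rabs_pos (f x)); pose proof (Rabs_pos (g x)). lra. }
  set (e := Rmin 1 (eps / (2 * C))).
  assert (He0 : 0 < e). { unfold e. apply Rmin_pos. lra. apply Rdiv_lt_0_compat; lra. }
  assert (He1 : e <= 1) by apply Rmin_l.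
  assert (He2 : e * C <= eps / 2).
  { assert (e <= eps / (2 * C)) by apply Rmin_r.
    apply Rle_trans with (eps / (2 * C) * C). apply Rmult_le_compat_r; lra.
    right. field. lra. }
  destruct (Hf e He0) as [d1 [Hd1 H1]]. destruct (Hg e He0) as [d2 [Hd2 H2]].
  exists (Rmin d1 d2). split. apply Rmin_pos; auto. intros y Hy.
  assert (A1 : Rabs (f y - f x) < e). { apply H1. intros k Hk. specialize (Hy k Hk). pose proof (Rmin_l d1 d2). lra. }
  assert (A2 : Rabs (g y - g x) < e). { apply H2. intros k Hk. specialize (Hy k Hk). pose proof (Rmin_r d1 d2). lra. }
  replace (f y * g y - f x * g x) with ((f y - f x) * (g y - g x) + f x * (g y - g x) + g x * (f y - f x)) by ring.
  eapply Rle_lt_trans. apply Rabs_triang. eapply Rle_lt_trans. apply Rplus_le_compat_r. apply Rabs_triang.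
  rewrite !Rabs_mult.
  pose proof (Rabs_pos (f y - f x)); pose proof (Rabs_pos (g y - g x));
  pose proof (Rabs_pos (f x)); pose proof (Rabs_pos (g x)).
  assert (Rabs (f y - f x) * Rabs (g y - g x) <= e * 1) by (apply Rmult_le_compat; lra).
  assert (Rabs (f x) * Rabs (g y - g x) <= Rabs (f x) * e) by (apply Rmult_le_compat_l; lra).
  assert (Rabs (g x) * Rabs (f y - f x) <= Rabs (g x) * e) by (apply Rmult_le_compat_l; lra).
  unfold C in He2. nra. Qed.

Lemma contAt_comp N f phi x : contAt N f x -> cont1 phi (f x) -> contAt N (fun y => phi (f y)) x.
Proof. intros Hf Hp eps He. destruct (Hp eps He) as [d [Hd H]].
  destruct (Hf d Hd) as [d' [Hd' H']]. exists d'. split; [assumption|]. intros y Hy. apply H. apply H'; auto. Qed.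

Lemma contAt_local N f g x : (exists r, 0 < r /\ forall y, closeN N x y r -> f y = g y) ->
  contAt N g x -> contAt N f x.
Proof. intros [r [Hr E]] H eps He. destruct (H eps He) as [d [Hd Hw]].
  exists (Rmin d r). split. apply Rmin_pos; auto. intros y Hy.
  rewrite (E y), (E x). apply Hw. intros k Hk. specialize (Hy k Hk). pose proof (Rmin_l d r); lra.
  intros k Hk. rewrite Rminus_eq_0, Rabs_R0; auto.
  intros k Hk. specialize (Hy k Hk). pose proof (Rmin_r d r); lra. Qed.


Lemma locally_R x r (P : R -> Prop) : 0 < r -> (forall y, Rabs (y - x) < r -> P y) -> locally x P.
Proof. intros Hr H. exists (mkposreal r Hr). intros y Hy. apply H. exact Hy. Qed.

Lemma deriv_local (f g : R -> R) x l : (exists r, 0 < r /\ forall y, Rabs (y - x) < r -> f y = g y) ->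
  derivable_pt_lim f x l -> derivable_pt_lim g x l.
Proof. intros [r [Hr E]] H. apply is_derive_Reals. apply is_derive_Reals in H.
  apply (is_derive_ext_loc f g); auto. apply (locally_R x r); auto. Qed.

Lemma powa_nz x q : x <> 0 -> powa x q = Rpower (Rabs x) q.
Proof. intros H. unfold powa. destruct (Req_dec_T x 0); [contradiction|reflexivity]. Qed.

Lemma powa_0 q : powa 0 q = 0.
Proof. unfold powa. destruct (Req_dec_T 0 0); [reflexivity|congruence]. Qed.

Lemma Rpower_pos x q : 0 < Rpower x q.
Proof. unfold Rpower. apply exp_pos. Qed.

Lemma powa_ge0 x q : 0 <= powa x q.
Proof. unfold powa. destruct (Req_dec_T x 0). lra. left; apply Rpower_pos. Qed.

Lemma powa_sq x q : x <> 0 -> powa x q = Rpower (x * x) (q / 2).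
Proof. intros H. rewrite powa_nz by auto.
  assert (A : 0 < Rabs x) by (apply Rabs_pos_lt; auto).
  replace (x * x) with (Rabs x * Rabs x) by (unfold Rabs; destruct (Rcase_abs x); ring).
  rewrite <- Rpower_mult_distr by auto. rewrite <- Rpower_plus. f_equal. field. Qed.

Lemma powa_deriv_nz x q : x <> 0 ->
  derivable_pt_lim (fun y => powa y q) x (q * x * powa x (q - 2)).
Proof. intros H. apply (deriv_local (fun y => Rpower (y * y) (q / 2))).
  - exists (Rabs x). split. apply Rabs_pos_lt; auto. intros y Hy.
    rewrite powa_sq; auto. intros ->. rewrite Rminus_0_l, Rabs_Ropp in Hy. lra.
  - assert (P : 0 < x * x). { destruct (Rlt_or_le 0 x). nra. assert (x < 0) by (destruct H0; auto; contradiction). nra. }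
    replace (q * x * powa x (q - 2)) with ((q / 2 * Rpower (x * x) (q / 2 - 1)) * (1 * x + x * 1)).
    2:{ rewrite (powa_sq x (q - 2)) by auto. replace (q / 2 - 1) with ((q - 2) / 2) by field. field. }
    apply (derivable_pt_lim_comp (fun y => y * y) (fun z => Rpower z (q / 2))).
    + apply (derivable_pt_lim_mult id id). apply derivable_pt_lim_id. apply derivable_pt_lim_id.
    + apply derivable_pt_lim_power; auto. Qed.

Definition spow (q x : R) : R := x * powa x (q - 2).

Lemma powa_small q eps : 0 < q -> 0 < eps -> exists d, 0 < d /\ forall w, Rabs w < d -> powa w q < eps.
Proof. intros Hq He. exists (Rpower eps (/ q)). split. apply Rpower_pos.
  intros w Hw. destruct (Req_dec w 0) as [->|Hne]. rewrite powa_0; auto.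
  rewrite powa_nz by auto.
  replace eps with (Rpower (Rpower eps (/ q)) q).
  apply Rlt_Rpower_l; auto. split; auto. apply Rabs_pos_lt; auto.
  rewrite Rpower_mult. replace (/ q * q) with 1 by (field; lra). apply Rpower_1; auto. Qed.

Lemma powa_cont0 q : 0 < q -> cont1 (fun y => powa y q) 0.
Proof. intros Hq eps He. destruct (powa_small q eps Hq He) as [d [Hd H]]. exists d. split; auto.
  intros w Hw. rewrite powa_0, Rminus_0_r. rewrite Rabs_pos_eq by apply powa_ge0. apply H.
  rewrite Rminus_0_r in Hw; auto. Qed.

Lemma powa_cont q x : 0 < q -> cont1 (fun y => powa y q) x.
Proof. intros Hq. destruct (Req_dec x 0) as [->|H]. apply powa_cont0; auto.
  eapply cont1_of_deriv. apply powa_deriv_nz; auto. Qed.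

Lemma powa_deriv q x : 1 < q -> derivable_pt_lim (fun y => powa y q) x (q * spow q x).
Proof. intros Hq. destruct (Req_dec x 0) as [->|H].
  - unfold spow. rewrite Rmult_0_l, Rmult_0_r. intros eps He.
    destruct (powa_small (q - 1) eps ltac:(lra) He) as [d [Hd Hs]].
    exists (mkposreal d Hd). intros h Hh0 Hh. simpl in Hh.
    rewrite Rplus_0_l, powa_0, Rminus_0_r, Rminus_0_r.
    rewrite !powa_nz by auto.
    assert (A : 0 < Rabs h) by (apply Rabs_pos_lt; auto).
    replace (Rpower (Rabs h) q / h) with ((Rpower (Rabs h) q / Rabs h) * (Rabs h / h)) by (field; split; lra).
    rewrite Rabs_mult. replace (Rabs (Rabs h / h)) with 1.
    2:{ unfold Rdiv. rewrite Rabs_mult, Rabs_Rinv by auto. rewrite Rabs_Rabsolu. field. lra. }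
    rewrite Rmult_1_r. rewrite Rabs_pos_eq.
    2:{ left. apply Rdiv_lt_0_compat; auto. apply Rpower_pos. }
    replace (Rpower (Rabs h) q / Rabs h) with (Rpower (Rabs h) (q - 1)).
    + specialize (Hs h Hh). rewrite powa_nz in Hs by auto. auto.
    + replace q with ((q - 1) + 1) at 2 by ring. rewrite Rpower_plus, Rpower_1 by auto. field. lra.
  - unfold spow. replace (q * (x * powa x (q - 2))) with (q * x * powa x (q - 2)) by ring.
    apply powa_deriv_nz; auto. Qed.

Lemma spow_abs q x : Rabs (spow q x) = powa x (q - 1).
Proof. unfold spow. destruct (Req_dec x 0) as [->|H].
  - rewrite !powa_0, Rmult_0_l, Rabs_R0; auto.
  - rewrite !powa_nz by auto. assert (A : 0 < Rabs x) by (apply Rabs_pos_lt; auto).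
    rewrite Rabs_mult. rewrite (Rabs_pos_eq (Rpower _ _)) by (left; apply Rpower_pos).
    replace (q - 1) with (1 + (q - 2)) by ring. rewrite Rpower_plus, Rpower_1; auto. Qed.

Lemma spow_mul q x : spow q x * x = powa x q.
Proof. unfold spow. destruct (Req_dec x 0) as [->|H].
  - rewrite !powa_0; ring.
  - rewrite !powa_nz by auto. assert (A : 0 < Rabs x) by (apply Rabs_pos_lt; auto).
    replace (x * Rpower (Rabs x) (q - 2) * x) with (Rabs x * Rabs x * Rpower (Rabs x) (q - 2))
      by (unfold Rabs; destruct (Rcase_abs x); ring).
    replace q with (1 + (1 + (q - 2))) at 2 by ring. rewrite !Rpower_plus, Rpower_1; auto. ring. Qed.

Lemma spow_cont q x : 1 < q -> cont1 (spow q) x.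
Proof. intros Hq. destruct (Req_dec x 0) as [->|H].
  - intros eps He. destruct (powa_cont0 (q - 1) ltac:(lra) eps He) as [d [Hd Hs]].
    exists d. split; auto. intros w Hw. unfold spow at 2. rewrite Rmult_0_l, Rminus_0_r.
    rewrite spow_abs. specialize (Hs w Hw). rewrite powa_0, Rminus_0_r in Hs.
    rewrite Rabs_pos_eq in Hs by apply powa_ge0. auto.
  - eapply cont1_of_deriv. unfold spow.
    apply (derivable_pt_lim_mult id (fun y => powa y (q - 2))). apply derivable_pt_lim_id.
    apply powa_deriv_nz; auto. Qed.


Lemma sumN_ext N f g : (forall k, (k < N)%nat -> f k = g k) -> sumN N f = sumN N g.
Proof. induction N; intros H; simpl. auto. rewrite IHN, H; auto. Qed.

Lemma sumN_two N j1 j2 c1 c2 (g : nat -> R) : j1 <> j2 ->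
  sumN N (fun k => (if Nat.eq_dec k j1 then c1 else if Nat.eq_dec k j2 then c2 else 0) * g k) =
  (if Compare_dec.lt_dec j1 N then c1 * g j1 else 0) + (if Compare_dec.lt_dec j2 N then c2 * g j2 else 0).
Proof. intros Hne. induction N as [|N IH]; simpl.
  - destruct (Compare_dec.lt_dec j1 0); destruct (Compare_dec.lt_dec j2 0); try lia. ring.
  - rewrite IH. rename N into M.
    destruct (Compare_dec.lt_dec j1 M); destruct (Compare_dec.lt_dec j2 M); destruct (Compare_dec.lt_dec j1 (S M)); destruct (Compare_dec.lt_dec j2 (S M));
    destruct (Nat.eq_dec M j1); destruct (Nat.eq_dec M j2); subst; try lia; ring. Qed.

Lemma sumN_upd N (x nu : nat -> R) k t : (k < N)%nat ->
  sumN N (fun j => upd x k t j * nu j) = sumN N (fun j => x j * nu j) + (t - x k) * nu k.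
Proof. induction N as [|N IH]; intros Hk; simpl. lia.
  destruct (Nat.eq_dec k N) as [->|Hne].
  - rewrite upd_same. rewrite (sumN_ext N (fun j => upd x N t j * nu j) (fun j => x j * nu j)).
    ring. intros j Hj. rewrite upd_other by lia. auto.
  - rewrite IH by lia. rewrite upd_other by lia. ring. Qed.

Lemma sumN_lin N a b f g : sumN N (fun k => a * f k + b * g k) = a * sumN N f + b * sumN N g.
Proof. induction N; simpl. ring. rewrite IHN. ring. Qed.

Lemma sumN_lin3 N a b c f g h : sumN N (fun k => a * f k + b * g k + c * h k) = a * sumN N f + b * sumN N g + c * sumN N h.
Proof. induction N; simpl. ring. rewrite IHN. ring. Qed.

Lemma sumN_abs_le N f g : (forall k, (k < N)%nat -> Rabs (f k) <= g k) -> Rabs (sumN N f) <= sumN N g.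
Proof. induction N; intros H; simpl. rewrite Rabs_R0; lra.
  eapply Rle_trans. apply Rabs_triang. pose proof (H N ltac:(lia)).
  assert (Rabs (sumN N f) <= sumN N g) by (apply IHN; intros; apply H; lia). lra. Qed.

Lemma sumN_nonneg N f : (forall k, (k < N)%nat -> 0 <= f k) -> 0 <= sumN N f.
Proof. induction N; intros H; simpl. lra. pose proof (H N ltac:(lia)).
  assert (0 <= sumN N f) by (apply IHN; intros; apply H; lia). lra. Qed.

Lemma dist_hyper N nu d x : sumN N (fun k => nu k ^ 2) = 1 ->
  distN N x (hyperplane N nu d) = Rabs (dotN N x nu - d).
Proof. intros Hnu. set (t := dotN N x nu - d).
  assert (G : is_glb (fun r => exists eta, hyperplane N nu d eta /\ r = eucl_dist N x eta) (Rabs t)).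
  { split.
    - intros r [eta [Heta ->]]. unfold eucl_dist. rewrite <- sqrt_Rsqr_abs. apply sqrt_le_1_alt.
      set (s := sumN N (fun k => (x k - eta k) * nu k)).
      assert (Es : s = t). { unfold s, t. unfold hyperplane, dotN in Heta. rewrite <- Heta. unfold dotN.
        replace (sumN N (fun k => (x k - eta k) * nu k)) with (1 * sumN N (fun k => x k * nu k) + (-1) * sumN N (fun k => eta k * nu k)).
        ring. rewrite <- sumN_lin. apply sumN_ext. intros; ring. }
      assert (Q : 0 <= sumN N (fun k => (x k - eta k - s * nu k) ^ 2)) by (apply sumN_nonneg; intros; apply pow2_ge_0).
      replace (sumN N (fun k => (x k - eta k - s * nu k) ^ 2)) with
        (1 * sumN N (fun k => (x k - eta k) ^ 2) + (-2 * s) * sumN N (fun k => (x k - eta k) * nu k) + (s * s) * sumN N (fun k => nu k ^ 2)) in Q.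
      2:{ rewrite <- sumN_lin3. apply sumN_ext. intros; ring. }
      fold s in Q. rewrite Hnu in Q. rewrite <- Es. unfold Rsqr. lra.
    - intros b Hb. apply Hb. exists (fun k => x k - t * nu k). split.
      + unfold hyperplane, dotN. replace (sumN N (fun k => (x k - t * nu k) * nu k)) with
          (1 * sumN N (fun k => x k * nu k) + (- t) * sumN N (fun k => nu k ^ 2)).
        rewrite Hnu. unfold t, dotN. ring. rewrite <- sumN_lin. apply sumN_ext; intros; ring.
      + unfold eucl_dist. replace (sumN N (fun k => (x k - (x k - t * nu k)) ^ 2)) with ((t * t) * sumN N (fun k => nu k ^ 2)).
        rewrite Hnu, Rmult_1_r. change (t * t) with (Rsqr t). rewrite sqrt_Rsqr_abs. auto.
        replace ((t * t) * sumN N (fun k => nu k ^ 2)) with ((t * t) * sumN N (fun k => nu k ^ 2) + 0 * sumN N (fun k => nu k ^ 2)) by ring.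
        rewrite <- sumN_lin. apply sumN_ext; intros; ring. }
  unfold distN, Rinf. destruct (excluded_middle_informative _) as [H|H].
  - destruct (constructive_indefinite_description _ _) as [m [Hm1 Hm2]]. simpl.
    destruct G as [G1 G2]. apply Rle_antisym; auto.
  - exfalso. apply H. eauto. Qed.

Lemma exp_convex x y th : 0 <= th <= 1 -> exp (th * x + (1 - th) * y) <= th * exp x + (1 - th) * exp y.
Proof. intros Hth. set (z := th * x + (1 - th) * y).
  assert (A : forall w, exp z * (1 + (w - z)) <= exp w).
  { intros w. replace (exp w) with (exp z * exp (w - z)) by (rewrite <- exp_plus; f_equal; ring).
    apply Rmult_le_compat_l. left; apply exp_pos. apply exp_ineq1_le. }
  pose proof (A x). pose proof (A y).
  assert (exp z = th * (exp z * (1 + (x - z))) + (1 - th) * (exp z * (1 + (y - z)))) by (unfold z; ring).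
  nra. Qed.

Lemma young_conv X Y th : 0 < X -> 0 < Y -> 0 <= th <= 1 ->
  Rpower X th * Rpower Y (1 - th) <= th * X + (1 - th) * Y.
Proof. intros HX HY Hth. unfold Rpower. rewrite <- exp_plus.
  replace (th * ln X + (1 - th) * ln Y) with (th * ln X + (1 - th) * ln Y) by ring.
  rewrite <- (exp_ln X) at 2 by auto. rewrite <- (exp_ln Y) at 2 by auto.
  apply exp_convex; auto. Qed.

Lemma young p w v : 1 < p -> 0 < w -> 0 < v ->
  Rpower w (p - 1) * v <= ((p - 1) / p) * ((p - 1) / p) * Rpower w p
                          + (1 / p) * Rpower ((p - 1) / p) (1 - p) * Rpower v p.
Proof. intros Hp Hw Hv. set (mu := (p - 1) / p). set (th := (p - 1) / p).
  assert (Hmu : 0 < mu) by (unfold mu; apply Rdiv_lt_0_compat; lra).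
  assert (Hth : 0 <= th <= 1). { unfold th. split. left; apply Rdiv_lt_0_compat; lra.
    apply Rmult_le_reg_r with p. lra. unfold Rdiv. rewrite Rmult_assoc, Rinv_l by lra. lra. }
  pose proof (young_conv (mu * Rpower w p) (Rpower mu (1 - p) * Rpower v p) th
     ltac:(apply Rmult_lt_0_compat; auto; apply Rpower_pos)
     ltac:(apply Rmult_lt_0_compat; apply Rpower_pos) Hth) as Y.
  rewrite <- !Rpower_mult_distr in Y by (auto; apply Rpower_pos).
  rewrite !Rpower_mult in Y.
  replace (p * th) with (p - 1) in Y by (unfold th; field; lra).
  replace ((1 - p) * (1 - th)) with (- th) in Y by (unfold th; field; lra).
  replace (p * (1 - th)) with 1 in Y by (unfold th; field; lra).
  rewrite Rpower_1 in Y by auto.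
  replace (Rpower mu th * Rpower w (p - 1) * (Rpower mu (- th) * v)) with
    (Rpower mu (th + - th) * Rpower w (p - 1) * v) in Y by (rewrite Rpower_plus; ring).
  replace (th + - th) with 0 in Y by ring. rewrite Rpower_O in Y by auto.
  replace (1 - th) with (1 / p) in Y by (unfold th; field; lra).
  unfold th in Y. fold mu in Y. lra. Qed.

Lemma young_point p A Uu B dl : 1 < p -> 0 < A -> 0 < Uu -> 0 < B -> 0 < dl ->
  Rpower A (p - 1) * Rpower dl (1 - p) * Rpower Uu (p - 1) * B <=
  ((p - 1) / p) * ((p - 1) / p) * (Rpower A p * Rpower dl (- p) * Rpower Uu p)
  + (1 / p) * Rpower ((p - 1) / p) (1 - p) * Rpower B p.
Proof. intros Hp HA HU HB Hd. set (w := A * Uu * Rpower dl (-1)).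
  assert (Hw : 0 < w) by (unfold w; repeat apply Rmult_lt_0_compat; auto; apply Rpower_pos).
  pose proof (young p w B Hp Hw HB) as Y.
  assert (E : forall q, Rpower w q = Rpower A q * Rpower Uu q * Rpower dl (- q)).
  { intros q. unfold w. rewrite <- !Rpower_mult_distr; auto; try apply Rpower_pos;
    try (apply Rmult_lt_0_compat; auto).
    rewrite Rpower_mult. replace (-1 * q) with (- q) by ring. auto. }
  rewrite !E in Y. replace (- (p - 1)) with (1 - p) in Y by ring.
  replace (Rpower A (p - 1) * Rpower dl (1 - p) * Rpower Uu (p - 1) * B) with
    (Rpower A (p - 1) * Rpower Uu (p - 1) * Rpower dl (1 - p) * B) by ring.
  replace (Rpower A p * Rpower dl (- p) * Rpower Uu p) with (Rpower A p * Rpower Uu p * Rpower dl (- p)) by ring.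
  exact Y. Qed.

Lemma final_alg p IL IR IJ : 1 < p -> (1 - p) * IL + p * IJ = 0 ->
  IJ <= ((p - 1) / p) * ((p - 1) / p) * IL + (1 / p) * Rpower ((p - 1) / p) (1 - p) * IR ->
  Rpower ((p - 1) / p) p * IL <= IR.
Proof. intros Hp Z Y. set (mu := (p - 1) / p) in *.
  assert (Hmu : 0 < mu) by (unfold mu; apply Rdiv_lt_0_compat; lra).
  assert (EJ : IJ = mu * IL) by (unfold mu; apply Rmult_eq_reg_l with p; [|lra]; field_simplify; lra).
  rewrite EJ in Y.
  assert (A : mu * IL <= Rpower mu (1 - p) * IR).
  { assert (B : mu * (1 / p) * IL <= (1 / p) * Rpower mu (1 - p) * IR).
    { replace (mu * (1 / p) * IL) with (mu * IL - mu * mu * IL) by (unfold mu; field; lra). lra. }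
    apply Rmult_le_reg_l with (1 / p). apply Rdiv_lt_0_compat; lra. lra. }
  apply Rmult_le_compat_l with (r := Rpower mu (p - 1)) in A; [|left; apply Rpower_pos].
  replace (Rpower mu (p - 1) * (Rpower mu (1 - p) * IR)) with (Rpower mu ((p - 1) + (1 - p)) * IR) in A
    by (rewrite Rpower_plus; ring).
  replace ((p - 1) + (1 - p)) with 0 in A by ring. rewrite Rpower_O in A by auto.
  replace (Rpower mu p) with (Rpower mu (p - 1) * mu). lra.
  replace p with ((p - 1) + 1) at 2 by ring. rewrite Rpower_plus, Rpower_1; auto. Qed.


Lemma pd_zero_loc k f x : (exists r, 0 < r /\ forall t, Rabs (t - x k) < r -> f (upd x k t) = 0) ->
  pd k f x = 0.
Proof. intros [r [Hr H]]. apply pd_eq_of. unfold pder.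
  apply (deriv_local (fun _ => 0)). exists r. split; auto. intros y Hy. symmetry. apply H; auto.
  apply derivable_pt_lim_const. Qed.

Lemma contN_dot N nu d : contN N (fun x => dotN N x nu - d).
Proof. intros x eps He. set (S := sumN N (fun k => Rabs (nu k)) + 1).
  assert (HS : 0 < S). { unfold S. assert (0 <= sumN N (fun k => Rabs (nu k))).
    apply sumN_nonneg. intros; apply Rabs_pos. lra. }
  exists (eps / S). split. apply Rdiv_lt_0_compat; auto.
  intros y Hy. unfold dotN.
  replace (sumN N (fun k => y k * nu k) - d - (sumN N (fun k => x k * nu k) - d))
    with (sumN N (fun k => 1 * (y k * nu k) + (-1) * (x k * nu k))) by (rewrite sumN_lin; ring).
  apply Rle_lt_trans with (sumN N (fun k => Rabs (nu k) * (eps / S))).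
  - apply sumN_abs_le. intros k Hk. replace (1 * (y k * nu k) + -1 * (x k * nu k)) with (nu k * (y k - x k)) by ring.
    rewrite Rabs_mult. apply Rmult_le_compat_l. apply Rabs_pos. left. apply Hy; auto.
  - replace (sumN N (fun k => Rabs (nu k) * (eps / S))) with ((eps / S) * sumN N (fun k => Rabs (nu k)) + 0 * sumN N (fun k => Rabs (nu k))).
    2:{ rewrite <- sumN_lin. apply sumN_ext. intros; ring. }
    apply Rmult_lt_reg_r with S; auto. unfold S at 3.
    replace ((eps / S * sumN N (fun k => Rabs (nu k)) + 0 * sumN N (fun k => Rabs (nu k))) * S) with
      (eps * sumN N (fun k => Rabs (nu k))) by (field; lra).
    unfold S. nra. Qed.

Lemma closeN_upd2' N x k t r : 0 < r -> Rabs (t - x k) < r -> closeN N x (upd x k t) r.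
Proof. intros Hr H. pose proof (closeN_upd2 N x r k (x k) t Hr H) as C.
  rewrite upd_id in C. exact C. Qed.

Lemma pd_supp N R0 k f : (k < N)%nat -> suppb N R0 f -> suppb N R0 (pd k f).
Proof. intros Hk Hs x Hx j Hj. destruct (Rle_dec (Rabs (x j)) R0) as [H|H]; auto. exfalso. apply Hx.
  apply pd_zero_loc. destruct (Nat.eq_dec j k) as [->|Hne].
  - exists (Rabs (x k) - R0). split. lra. intros t Ht.
    destruct (Req_dec (f (upd x k t)) 0) as [E|E]; auto. exfalso.
    pose proof (Hs _ E k Hk). rewrite upd_same in H0.
    pose proof (Rabs_triang_inv (x k) (t)). rewrite <- Rabs_Ropp in Ht. replace (- (t - x k)) with (x k - t) in Ht by ring. lra.
  - exists 1. split. lra. intros t Ht.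
    destruct (Req_dec (f (upd x k t)) 0) as [E|E]; auto. exfalso.
    pose proof (Hs _ E j Hj). rewrite upd_other in H0 by auto. lra. Qed.


Lemma main_gen (N : nat) (nu : nat -> R) (d p : R) (u : (nat -> R) -> R) (j1 j2 m0 : nat) (kap : R)
  (V : (nat -> R) -> nat -> R) :
  (forall x k, V x k = if Nat.eq_dec k j1 then 1 else if Nat.eq_dec k j2 then kap * x m0 else 0) ->
  sumN N (fun k => nu k ^ 2) = 1 -> 1 < p -> j1 <> j2 -> m0 <> j1 -> m0 <> j2 ->
  (j1 < N)%nat -> (j2 < N)%nat -> (m0 < N)%nat ->
  smoothN N u -> compact_support_in N u (halfspace N nu d) ->
  Rpower ((p - 1) / p) p *
    integral_on N (halfspace N nu d)
      (fun xi => powa (dotN N (V xi) nu) p / powa (distN N xi (hyperplane N nu d)) p * powa (u xi) p)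
  <= integral_on N (halfspace N nu d) (fun xi => powa (vf_apply N V u xi) p).
Proof.
  intros HV Hnu Hp Hj12 Hm1 Hm2 Hj1 Hj2 Hm0 Hs Hc.
  destruct Hc as [K [HKc [HKb [HKH HuK]]]].
  destruct HKb as [R1 HR1].
  set (R0 := Rabs R1).
  assert (HR0 : 0 <= R0) by apply Rabs_pos.
  assert (Hsu : suppb N R0 u).
  { intros x Hx k Hk. pose proof (HR1 x (HuK x Hx) k Hk). pose proof (Rle_abs R1). unfold R0. lra. }
  set (del := fun x => dotN N x nu - d).
  assert (Hdc : contN N del) by apply contN_dot.
  destruct (pos_lower N K del Hdc HKc (ex_intro _ R1 HR1)) as [c [Hc0 HcK]].
  { intros x Kx. pose proof (HKH x Kx). unfold halfspace in H. unfold del. lra. }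
  assert (Huc : forall x, u x <> 0 -> c <= del x) by (intros; apply HcK, HuK; auto).
  destruct (Hs 1%nat) as [Hu0 Hu1].
  assert (Hpd : forall k x, (k < N)%nat -> pder k u x (pd k u x)).
  { intros k x Hk. apply pder_pd. apply (Hu1 k Hk). }
  assert (Hpdc : forall k, (k < N)%nat -> contN N (pd k u)).
  { intros k Hk. apply (Hu1 k Hk). }
  assert (Hloc : forall x, del x < c -> exists r, 0 < r /\ forall y, closeN N x y r -> u y = 0).
  { intros x Hx. destruct (Hdc x (c - del x) ltac:(lra)) as [r [Hr H]]. exists r. split; auto.
    intros y Hy. destruct (Req_dec (u y) 0) as [E|E]; auto. exfalso. pose proof (Huc y E).
    specialize (H y Hy). unfold Rabs in H. destruct (Rcase_abs (del y - del x)); lra. }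
  assert (Hpd0 : forall k x, (k < N)%nat -> del x < c -> pd k u x = 0).
  { intros k x Hk Hx. apply pd_zero_loc. destruct (Hloc x Hx) as [r [Hr H]]. exists r. split; auto.
    intros t Ht. apply H. apply closeN_upd2'; auto. }

  set (a := fun x : nat -> R => nu j1 + kap * x m0 * nu j2).
  set (Vu := fun x => pd j1 u x + kap * x m0 * pd j2 u x).
  set (W := fun q x => if Rlt_dec (c / 2) (del x) then Rpower (del x) q else 0).
  set (U := fun x => powa (u x) p).
  set (Lf := fun x => powa (a x) p * W (- p) x * U x).
  set (Rf := fun x => powa (Vu x) p).
  set (Jf := fun x => spow p (a x) * W (1 - p) x * spow p (u x) * Vu x).
  set (F := fun x => spow p (a x) * W (1 - p) x * U x).
  set (F2 := fun x => kap * x m0 * F x).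
  set (D := fun k x => spow p (a x) * ((1 - p) * nu k * W (- p) x * U x + p * W (1 - p) x * spow p (u x) * pd k u x)).
  assert (Hp0 : 0 < p) by lra.
  assert (ca : forall x, contAt N a x).
  { intros x. apply contAt_plus. apply contAt_const. apply contAt_mult. apply contAt_mult.
    apply contAt_const. apply contAt_coord; auto. apply contAt_const. }
  assert (cW : forall q x, c / 2 < del x -> contAt N (W q) x).
  { intros q x Hx. apply (contAt_local N (W q) (fun y => Rpower (del y) q)).
    - destruct (Hdc x (del x - c / 2) ltac:(lra)) as [r [Hr H]]. exists r. split; auto.
      intros y Hy. unfold W. destruct (Rlt_dec (c / 2) (del y)) as [_|H']; auto. exfalso.
      specialize (H y Hy). unfold Rabs in H. destruct (Rcase_abs (del y - del x)); lra.
    - apply (contAt_comp N del (fun z => Rpower z q)). exact (Hdc x).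
      eapply cont1_of_deriv. apply derivable_pt_lim_power. lra. }
  assert (cu : forall x, contAt N u x) by (intros x; exact (Hu0 x)).
  assert (cpd : forall k x, (k < N)%nat -> contAt N (pd k u) x) by (intros k x Hk; exact (Hpdc k Hk x)).
  assert (cVu : forall x, contAt N Vu x).
  { intros x. apply contAt_plus. apply cpd; auto. apply contAt_mult. apply contAt_mult.
    apply contAt_const. apply contAt_coord; auto. apply cpd; auto. }
  assert (cU : forall x, contAt N U x).
  { intros x. apply (contAt_comp N u (fun z => powa z p)); auto. apply powa_cont; auto. }
  assert (csu : forall x, contAt N (fun y => spow p (u y)) x).
  { intros x. apply (contAt_comp N u (spow p)); auto. apply spow_cont; auto. }
  assert (csa : forall x, contAt N (fun y => spow p (a y)) x).
  { intros x. apply (contAt_comp N a (spow p)); auto. apply spow_cont; auto. }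
  assert (cpa : forall x, contAt N (fun y => powa (a y) p) x).
  { intros x. apply (contAt_comp N a (fun z => powa z p)); auto. apply powa_cont; auto. }
  assert (Cfac : forall g, (forall y, u y = 0 -> g y = 0) -> (forall x, c / 2 < del x -> contAt N g x) ->
                   contN N g).
  { intros g Hg H x. destruct (Rlt_dec (c / 2) (del x)) as [Hx|Hx]. apply H; auto.
    apply (contAt_local N g (fun _ => 0)). 2: apply contAt_const.
    destruct (Hloc x ltac:(lra)) as [r [Hr Hr']]. exists r. split; auto. }
  assert (U0 : forall y, u y = 0 -> U y = 0). { intros y Hy. unfold U. rewrite Hy. apply powa_0. }
  assert (S0 : forall y, u y = 0 -> spow p (u y) = 0). { intros y Hy. rewrite Hy. unfold spow. ring. }

  set (G2 := fun x => kap * x m0 * D j2 x).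
  assert (Sfac : forall g, (forall y, u y = 0 -> g y = 0) -> suppb N R0 g).
  { intros g Hg x Hx. apply Hsu. intros E. apply Hx. apply Hg; auto. }
  assert (zLf : forall y, u y = 0 -> Lf y = 0). { intros y Hy. unfold Lf. rewrite U0; auto. ring. }
  assert (zJf : forall y, u y = 0 -> Jf y = 0). { intros y Hy. unfold Jf. rewrite S0; auto. ring. }
  assert (zF : forall y, u y = 0 -> F y = 0). { intros y Hy. unfold F. rewrite U0; auto. ring. }
  assert (zF2 : forall y, u y = 0 -> F2 y = 0). { intros y Hy. unfold F2. rewrite zF; auto. ring. }
  assert (zD : forall k y, u y = 0 -> D k y = 0). { intros k y Hy. unfold D. rewrite U0, S0; auto. ring. }
  assert (zG2 : forall y, u y = 0 -> G2 y = 0). { intros y Hy. unfold G2. rewrite zD; auto. ring. }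
  assert (uLf : UC N Lf).
  { apply (UC_of_cont N R0); [exact HR0| |apply Sfac; auto]. apply Cfac; auto. intros x Hx. unfold Lf.
    apply contAt_mult. apply contAt_mult. apply cpa. apply cW; auto. apply cU. }
  assert (uJf : UC N Jf).
  { apply (UC_of_cont N R0); [exact HR0| |apply Sfac; auto]. apply Cfac; auto. intros x Hx. unfold Jf.
    apply contAt_mult. apply contAt_mult. apply contAt_mult. apply csa. apply cW; auto. apply csu. apply cVu. }
  assert (uF : UC N F).
  { apply (UC_of_cont N R0); [exact HR0| |apply Sfac; auto]. apply Cfac; auto. intros x Hx. unfold F.
    apply contAt_mult. apply contAt_mult. apply csa. apply cW; auto. apply cU. }
  assert (cF : forall x, contAt N F x).
  { assert (H : contN N F). { apply Cfac; auto. intros x Hx. unfold F.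
    apply contAt_mult. apply contAt_mult. apply csa. apply cW; auto. apply cU. }
    intros x; exact (H x). }
  assert (uF2 : UC N F2).
  { apply (UC_of_cont N R0); [exact HR0| |apply Sfac; auto]. intros x. unfold F2.
    apply contAt_mult. apply contAt_mult. apply contAt_const. apply contAt_coord; auto. apply cF. }
  assert (cD : forall k, (k < N)%nat -> forall x, contAt N (D k) x).
  { intros k Hk. assert (H : contN N (D k)).
    { apply Cfac. intros; apply zD; auto. intros x Hx. unfold D.
    apply contAt_mult. apply csa. apply contAt_plus.
    apply contAt_mult. apply contAt_mult. apply contAt_const. apply cW; auto. apply cU.
    apply contAt_mult. apply contAt_mult. apply contAt_mult. apply contAt_const. apply cW; auto.
    apply csu. apply cpd; auto. }
    intros x; exact (H x). }
  assert (uD1 : UC N (D j1)).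
  { apply (UC_of_cont N R0); [exact HR0| |apply Sfac; intros; apply zD; auto]. intros x; apply cD; auto. }
  assert (uG2 : UC N G2).
  { apply (UC_of_cont N R0); [exact HR0| |apply Sfac; auto]. intros x. unfold G2.
    apply contAt_mult. apply contAt_mult. apply contAt_const. apply contAt_coord; auto. apply cD; auto. }
  assert (uRf : UC N Rf).
  { apply (UC_of_cont N R0); [exact HR0| |]. intros x. unfold Rf.
    apply (contAt_comp N Vu (fun z => powa z p)); auto. apply powa_cont; auto.
    intros x Hx k Hk. unfold Rf, Vu in Hx.
    destruct (Req_dec (pd j1 u x) 0) as [E1|E1].
    - destruct (Req_dec (pd j2 u x) 0) as [E2|E2].
      + exfalso. apply Hx. rewrite E1, E2. replace (0 + kap * x m0 * 0) with 0 by ring. apply powa_0.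
      + apply (pd_supp N R0 j2 u Hj2 Hsu x E2 k Hk).
    - apply (pd_supp N R0 j1 u Hj1 Hsu x E1 k Hk). }

  assert (aupd : forall x k t, k <> m0 -> a (upd x k t) = a x).
  { intros x k t Hk. unfold a. rewrite upd_other by auto. auto. }
  assert (dupd : forall x k t, (k < N)%nat -> del (upd x k t) = del x + (t - x k) * nu k).
  { intros x k t Hk. unfold del, dotN. rewrite sumN_upd by auto. ring. }
  assert (Dline : forall k, (k < N)%nat -> k <> m0 -> forall x, pder k F x (D k x)).
  { intros k Hk Hkm x. unfold pder.
    destruct (Rlt_dec (c / 2) (del x)) as [Hx|Hx].
    - set (g := fun t => spow p (a x) * (Rpower (del x + (t - x k) * nu k) (1 - p) * powa (u (upd x k t)) p)).
      apply (deriv_local g).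
      + exists ((del x - c / 2) / (Rabs (nu k) + 1)). split.
        { apply Rdiv_lt_0_compat. lra. pose proof (Rabs_pos (nu k)); lra. }
        intros t Ht. unfold g, F, W, U. rewrite aupd by auto. rewrite dupd by auto.
        destruct (Rlt_dec (c / 2) (del x + (t - x k) * nu k)) as [_|H']; [ring|].
        exfalso. apply H'.
        assert (A : Rabs ((t - x k) * nu k) < del x - c / 2).
        { rewrite Rabs_mult. pose proof (Rabs_pos (nu k)). pose proof (Rabs_pos (t - x k)).
          apply Rmult_lt_compat_r with (r := Rabs (nu k) + 1) in Ht; [|lra].
          unfold Rdiv in Ht. rewrite Rmult_assoc, Rinv_l in Ht by lra. nra. }
        unfold Rabs in A. destruct (Rcase_abs ((t - x k) * nu k)); lra.
      + assert (d1 : derivable_pt_lim (fun t => del x + (t - x k) * nu k) (x k) (nu k)).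
        { apply is_derive_Reals. auto_derive. auto. ring. }
        assert (d2 : derivable_pt_lim (fun z => Rpower z (1 - p)) ((fun t => del x + (t - x k) * nu k) (x k))
                       ((1 - p) * Rpower (del x) (1 - p - 1))).
        { replace ((fun t => del x + (t - x k) * nu k) (x k)) with (del x) by ring.
          apply derivable_pt_lim_power. lra. }
        pose proof (derivable_pt_lim_comp _ _ _ _ _ d1 d2) as d12.
        assert (d3 : derivable_pt_lim (fun t => u (upd x k t)) (x k) (pd k u x)).
        { pose proof (line_deriv k u x (x k)) as L. rewrite upd_id in L. apply L. rewrite <- (upd_id x k) at 1.
          rewrite upd_id. apply Hpd; auto. }
        assert (d4 : derivable_pt_lim (fun z => powa z p) ((fun t => u (upd x k t)) (x k)) (p * spow p (u x))).
        { simpl. rewrite upd_id. apply powa_deriv; auto. }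
        pose proof (derivable_pt_lim_comp _ _ _ _ _ d3 d4) as d34.
        pose proof (derivable_pt_lim_mult _ _ _ _ _ d12 d34) as dm.
        pose proof (derivable_pt_lim_mult _ _ _ _ _ (derivable_pt_lim_const (spow p (a x)) (x k)) dm) as dmm.
        unfold g. unfold comp, mult_fct in dmm.
        replace (D k x) with
          (0 * ((fun t => Rpower (del x + (t - x k) * nu k) (1 - p)) (x k) * (fun t => powa (u (upd x k t)) p) (x k)) +
           spow p (a x) * (((1 - p) * Rpower (del x) (1 - p - 1) * nu k) * (fun t => powa (u (upd x k t)) p) (x k) +
           (fun t => Rpower (del x + (t - x k) * nu k) (1 - p)) (x k) * (p * spow p (u x) * pd k u x))).
        exact dmm.
        simpl. rewrite upd_id. replace (del x + (x k - x k) * nu k) with (del x) by ring.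
        unfold D, W, U. destruct (Rlt_dec (c / 2) (del x)); [|contradiction].
        replace (1 - p - 1) with (- p) by ring. ring.
    - destruct (Hloc x ltac:(lra)) as [r [Hr Hr']].
      assert (ux : u x = 0) by (apply Hr'; intros j Hj; rewrite Rminus_diag, Rabs_R0; auto).
      replace (D k x) with 0 by (symmetry; apply zD; auto).
      apply (deriv_local (fun _ => 0)). exists r. split; auto. intros t Ht. symmetry.
      apply zF. apply Hr'. apply closeN_upd2'; auto. apply derivable_pt_lim_const. }

  assert (DF2 : forall x, pder j2 F2 x (G2 x)).
  { intros x. unfold pder, F2, G2. pose proof (Dline j2 Hj2 (fun H => Hm2 (eq_sym H)) x) as H. unfold pder in H.
    replace (fun t => kap * upd x j2 t m0 * F (upd x j2 t)) with (fun t => kap * x m0 * F (upd x j2 t)).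
    2:{ apply functional_extensionality; intro t. rewrite upd_other by auto. auto. }
    replace (kap * x m0 * D j2 x) with (0 * F (upd x j2 (x j2)) + kap * x m0 * D j2 x) by ring.
    apply (derivable_pt_lim_mult (fun _ => kap * x m0) (fun t => F (upd x j2 t))).
    apply derivable_pt_lim_const. auto. }
  assert (DF1 : forall x, pder j1 F x (D j1 x)) by (apply Dline; auto).
  assert (EpF : pd j1 F = D j1).
  { apply functional_extensionality; intro x. apply pd_eq_of; auto. }
  assert (EpF2 : pd j2 F2 = G2).
  { apply functional_extensionality; intro x. apply pd_eq_of; auto. }
  set (M := R0 + 1).
  assert (HM : 0 <= M) by (unfold M; lra).
  assert (uM : forall x k t, (k < N)%nat -> R0 < Rabs t -> u (upd x k t) = 0).
  { intros x k t Hk Ht. destruct (Req_dec (u (upd x k t)) 0) as [E|E]; auto. exfalso.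
    pose proof (Hsu _ E k Hk). rewrite upd_same in H. lra. }
  assert (HRM1 : R0 < Rabs M) by (unfold M; rewrite Rabs_pos_eq; lra).
  assert (HRM2 : R0 < Rabs (- M)) by (rewrite Rabs_Ropp; auto).
  assert (Z1 : intCube N M (D j1) = 0).
  { rewrite <- EpF. apply (intCube_pd_zero N M j1 HM N Hj1 F uF);
    [rewrite EpF; exact uD1 | intros x; rewrite EpF; auto
    | intros x; apply zF; apply uM; auto | intros x; apply zF; apply uM; auto]. }
  assert (Z2 : intCube N M G2 = 0).
  { rewrite <- EpF2. apply (intCube_pd_zero N M j2 HM N Hj2 F2 uF2);
    [rewrite EpF2; exact uG2 | intros x; rewrite EpF2; auto
    | intros x; apply zF2; apply uM; auto | intros x; apply zF2; apply uM; auto]. }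
  assert (Pid : forall x, 1 * D j1 x + 1 * G2 x = (1 - p) * Lf x + p * Jf x).
  { intros x. unfold D, G2, Lf, Jf, Vu, D. rewrite <- (spow_mul p (a x)). unfold a. ring. }
  assert (ZZ : (1 - p) * intCube N M Lf + p * intCube N M Jf = 0).
  { rewrite <- (intCube_lin N M HM); auto.
    replace (fun x => (1 - p) * Lf x + p * Jf x) with (fun x => 1 * D j1 x + 1 * G2 x).
    rewrite (intCube_lin N M HM); auto. rewrite Z1, Z2. ring.
    apply functional_extensionality; intro x. apply Pid. }

  set (al := ((p - 1) / p) * ((p - 1) / p)).
  set (be := (1 / p) * Rpower ((p - 1) / p) (1 - p)).
  assert (Hal : 0 <= al) by (unfold al; apply Rle_0_sqr).
  assert (Hbe : 0 <= be) by (unfold be; left; apply Rmult_lt_0_compat; [apply Rdiv_lt_0_compat; lra | apply Rpower_pos]).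
  assert (W0 : forall q x, 0 <= W q x). { intros q x. unfold W. destruct (Rlt_dec _ _). left; apply Rpower_pos. lra. }
  assert (Lf0 : forall x, 0 <= Lf x).
  { intros x. unfold Lf, U. apply Rmult_le_pos. apply Rmult_le_pos. apply powa_ge0. apply W0. apply powa_ge0. }
  assert (Rf0 : forall x, 0 <= Rf x) by (intros; apply powa_ge0).
  assert (YP : forall x, Rabs (Jf x) <= al * Lf x + be * Rf x).
  { intros x. pose proof (Lf0 x). pose proof (Rf0 x).
    assert (Rhs0 : 0 <= al * Lf x + be * Rf x) by (apply Rplus_le_le_0_compat; apply Rmult_le_pos; auto).
    destruct (Rlt_dec (c / 2) (del x)) as [Hx|Hx].
    2:{ replace (Jf x) with 0. rewrite Rabs_R0; auto. unfold Jf, W. destruct (Rlt_dec _ _); [contradiction|ring]. }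
    destruct (Req_dec (a x) 0) as [Ea|Ea].
    { replace (Jf x) with 0. rewrite Rabs_R0; auto. unfold Jf. rewrite Ea. unfold spow. ring. }
    destruct (Req_dec (u x) 0) as [Eu|Eu].
    { replace (Jf x) with 0. rewrite Rabs_R0; auto. unfold Jf. rewrite Eu. unfold spow. ring. }
    destruct (Req_dec (Vu x) 0) as [Ev|Ev].
    { replace (Jf x) with 0. rewrite Rabs_R0; auto. unfold Jf. rewrite Ev. ring. }
    assert (Hd : 0 < del x) by lra.
    assert (EJ : Rabs (Jf x) = Rpower (Rabs (a x)) (p - 1) * Rpower (del x) (1 - p) * Rpower (Rabs (u x)) (p - 1) * Rabs (Vu x)).
    { unfold Jf, W. destruct (Rlt_dec _ _); [|contradiction]. rewrite !Rabs_mult, !spow_abs, !powa_nz by auto.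
      rewrite (Rabs_pos_eq (Rpower (del x) (1 - p))) by (left; apply Rpower_pos). auto. }
    assert (EL : Lf x = Rpower (Rabs (a x)) p * Rpower (del x) (- p) * Rpower (Rabs (u x)) p).
    { unfold Lf, W, U. destruct (Rlt_dec _ _); [|contradiction]. rewrite !powa_nz by auto. auto. }
    assert (ER : Rf x = Rpower (Rabs (Vu x)) p). { unfold Rf. rewrite powa_nz; auto. }
    rewrite EJ, EL, ER. unfold al, be. apply young_point; auto; apply Rabs_pos_lt; auto. }
  assert (IY : intCube N M Jf <= al * intCube N M Lf + be * intCube N M Rf).
  { rewrite <- (intCube_lin N M HM); auto.
    apply Rle_trans with (intCube N M (fun x => Rabs (Jf x))).
    apply (intCube_le N M HM); auto. apply UC_abs; auto. intros x; apply Rle_abs.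
    apply (intCube_le N M HM); auto. apply UC_abs; auto. apply UC_lin; auto. }
  pose proof (final_alg p _ _ _ Hp ZZ IY) as FIN.

  assert (Edot : forall x, dotN N (V x) nu = a x).
  { intros x. unfold dotN. rewrite (sumN_ext N _ (fun k => (if Nat.eq_dec k j1 then 1 else if Nat.eq_dec k j2 then kap * x m0 else 0) * nu k)).
    rewrite sumN_two by auto. destruct (Compare_dec.lt_dec j1 N); destruct (Compare_dec.lt_dec j2 N); try lia.
    unfold a. ring. intros k Hk. rewrite HV. auto. }
  assert (Evf : forall x, vf_apply N V u x = Vu x).
  { intros x. unfold vf_apply. rewrite (sumN_ext N _ (fun k => (if Nat.eq_dec k j1 then 1 else if Nat.eq_dec k j2 then kap * x m0 else 0) * pd k u x)).
    rewrite sumN_two by auto. destruct (Compare_dec.lt_dec j1 N); destruct (Compare_dec.lt_dec j2 N); try lia.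
    unfold Vu. ring. intros k Hk. rewrite HV. auto. }
  assert (HRM : R0 <= M) by (unfold M; lra).
  replace (integral_on N (halfspace N nu d)
      (fun xi => powa (dotN N (V xi) nu) p / powa (distN N xi (hyperplane N nu d)) p * powa (u xi) p))
    with (intCube N M Lf).
  replace (integral_on N (halfspace N nu d) (fun xi => powa (vf_apply N V u xi) p)) with (intCube N M Rf).
  exact FIN.
  - unfold integral_on.
    replace (fun xi => if excluded_middle_informative (halfspace N nu d xi) then powa (vf_apply N V u xi) p else 0)
      with Rf.
    symmetry. apply (integralRN_eq N R0 M Rf HR0 HRM uRf).
    + intros x Hx k Hk. unfold Rf in Hx. destruct (Req_dec (pd j1 u x) 0) as [E1|E1].
      * destruct (Req_dec (pd j2 u x) 0) as [E2|E2].
        -- exfalso. apply Hx. unfold Vu. rewrite E1, E2. replace (0 + kap * x m0 * 0) with 0 by ring. apply powa_0.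
        -- apply (pd_supp N R0 j2 u Hj2 Hsu x E2 k Hk).
      * apply (pd_supp N R0 j1 u Hj1 Hsu x E1 k Hk).
    + apply functional_extensionality; intro x.
      destruct (excluded_middle_informative _) as [Hh|Hh]. rewrite Evf; auto.
      unfold Rf. replace (Vu x) with 0. apply powa_0.
      unfold halfspace in Hh. assert (del x < c) by (unfold del; lra).
      unfold Vu. rewrite !Hpd0; auto. ring.
  - unfold integral_on.
    replace (fun xi => if excluded_middle_informative (halfspace N nu d xi) then
       powa (dotN N (V xi) nu) p / powa (distN N xi (hyperplane N nu d)) p * powa (u xi) p else 0)
      with Lf.
    symmetry. apply (integralRN_eq N R0 M Lf HR0 HRM uLf). apply Sfac; auto.
    apply functional_extensionality; intro x.
    destruct (Req_dec (u x) 0) as [Eu|Eu].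
    { rewrite zLf by auto. destruct (excluded_middle_informative _); auto. rewrite Eu, powa_0. ring. }
    pose proof (Huc x Eu) as Hcx. pose proof (HKH x (HuK x Eu)) as Hh.
    destruct (excluded_middle_informative _) as [_|Hn]; [|contradiction].
    rewrite Edot, dist_hyper by auto. fold (del x).
    assert (Hd : 0 < del x) by lra.
    rewrite Rabs_pos_eq by lra. rewrite (powa_nz (del x)) by lra. rewrite Rabs_pos_eq by lra.
    unfold Lf, W, U. destruct (Rlt_dec (c / 2) (del x)); [|lra].
    rewrite Rpower_Ropp. field. apply Rgt_not_eq. apply Rpower_pos.
Qed.


Theorem mainTheorem5 (n : nat) (nu : nat -> R) (d p : R) (i : nat)
  (u : (nat -> R) -> R) :
  sumN (2 * n + 1) (fun k => nu k ^ 2) = 1 ->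
  1 < p ->
  (1 <= i <= n)%nat ->
  depends_only (2 * n + 1) u ->
  smoothN (2 * n + 1) u ->
  compact_support_in (2 * n + 1) u (halfspace (2 * n + 1) nu d) ->
  Rpower ((p - 1) / p) p *
    integral_on (2 * n + 1) (halfspace (2 * n + 1) nu d)
      (fun xi => powa (dotN (2 * n + 1) (Xvec n i xi) nu) p
                 / powa (distN (2 * n + 1) xi (hyperplane (2 * n + 1) nu d)) p
                 * powa (u xi) p)
  <= integral_on (2 * n + 1) (halfspace (2 * n + 1) nu d)
       (fun xi => powa (vf_apply (2 * n + 1) (Xvec n i) u xi) p)
  /\
  Rpower ((p - 1) / p) p *
    integral_on (2 * n + 1) (halfspace (2 * n + 1) nu d)
      (fun xi => powa (dotN (2 * n + 1) (Yvec n i xi) nu) p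
                 / powa (distN (2 * n + 1) xi (hyperplane (2 * n + 1) nu d)) p
                 * powa (u xi) p)
  <= integral_on (2 * n + 1) (halfspace (2 * n + 1) nu d)
       (fun xi => powa (vf_apply (2 * n + 1) (Yvec n i) u xi) p).
Proof.
  intros Hnu Hp Hi Hdep Hs Hc. split.
  - apply (main_gen (2 * n + 1) nu d p u (i - 1) (2 * n) (n + (i - 1)) 2); auto; try lia.
  - apply (main_gen (2 * n + 1) nu d p u (n + (i - 1)) (2 * n) (i - 1) (-2)); auto; try lia.
    all: intros x k; unfold Yvec; destruct (Nat.eq_dec k (n + (i - 1))); auto;
    destruct (Nat.eq_dec k (2 * n)); auto; ring.
Qed.
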